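(* Let $q\ge1$ and assume Hypothesis (H$_q$). Then for every $\theta>0$, $$\Big|\frac16\Big[f(ma)+4f\Big(\frac{m(a+b)}{2}\Big)+f(mb)\Big]-\frac{\Gamma(\theta+1)2^{\theta-1}}{m^\theta(b-a)^\theta}\Big[J^\theta_{(\frac{m(a+b)}{2})^-}f(ma)+J^\theta_{(\frac{m(a+b)}{2})^+}f(mb)\Big]\Big|$$ $$\le\frac{m(b-a)}{4}A_1\big(\theta,\tfrac13\big)^{1-\frac1q}\Big\{\Big(\Big|f'\Big(\frac{m(a+b)}2\Big)\Big|^qA_2\big(\alpha,\theta,\tfrac13\big)+m|f'(a)|^qA_3\big(\alpha,\theta,\tfrac13\big)\Big)^{\frac1q}+\Big(\Big|f'\Big(\frac{m(a+b)}2\Big)\Big|^qA_2\big(\alpha,\theta,\tfrac13\big)+m|f'(b)|^qA_3\big(\alpha,\theta,\tfrac13\big)\Big)^{\frac1q}\Big\}.$$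
   Context: Let $\Gamma$ denote Euler's Gamma function. For $\theta>0$, $c=\frac{m(a+b)}{2}$: $J^\theta_{c^-}f(ma)=\frac{1}{\Gamma(\theta)}\int_{ma}^{c}(s-ma)^{\theta-1}f(s)\,ds$ and $J^\theta_{c^+}f(mb)=\frac{1}{\Gamma(\theta)}\int_{c}^{mb}(mb-s)^{\theta-1}f(s)\,ds$. $(\alpha,m)$-convexity: for $(\alpha,m)\in[0,1]\times(0,1]$ and an interval $K\subseteq[0,\infty)$, a function $g:K\to\mathbb{R}$ is $(\alpha,m)$-convex on $K$ if $g(tX+m(1-t)Y)\le t^\alpha g(X)+m(1-t^\alpha)g(Y)$ for all $X,Y\in K$ and $t\in[0,1]$ with $tX+m(1-t)Y\in K$ (convention $0^0=1$). Hypothesis (H$_q$): $I\subseteq[0,\infty)$ is an interval, $f:I\to\mathbb{R}$ is differentiable on the interior $I^\circ$, $m\in(0,1]$, $\alpha\in[0,1]$, $a<b$ with $ma,b\in I^\circ$, $f'$ is Lebesgue integrable on $[ma,mb]$, and $|f'|^q$ is $(\alpha,m)$-convex on $[ma,b]$. Constants: $A_1(\theta,\lambda)=\frac{2\theta\lambda^{1+\frac1\theta}+1}{\theta+1}-\lambda$, $A_2(\alpha,\theta,\lambda)=\frac{2\theta\lambda^{1+\frac{1+\alpha}{\theta}}}{(\alpha+1)(\alpha+\theta+1)}+\frac{1}{\alpha+\theta+1}-\frac{\lambda}{\alpha+1}$, $A_3(\alpha,\theta,\lambda)=A_1(\theta,\lambda)-A_2(\alpha,\theta,\lambda)$. *)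

(* Defs.v *)
From Stdlib Require Import Reals Lra Classical ClassicalEpsilon.
Open Scope R_scope.

(* x^y for x >= 0, y > 0 (value 0 at x = 0; x <= 0 never used otherwise) *)
Definition rpow (x y : R) : R := if Rlt_dec 0 x then Rpower x y else 0.

(* t^alpha for t in [0,1], with the convention 0^0 = 1 *)
Definition tpow (t alpha : R) : R :=
  if Rlt_dec 0 t then Rpower t alpha
  else if Req_EM_T alpha 0 then 1 else 0.

Definition is_RInt (g : R -> R) (a b v : R) : Prop :=
  exists pr : Riemann_integrable g a b, RiemannInt pr = v.

Definition lim_left_int (g : R -> R) (a b l : R) : Prop :=
  forall eps, 0 < eps -> exists delta, 0 < delta /\
    forall h, 0 < h < delta -> exists v, is_RInt g (a + h) b v /\ Rabs (v - l) < eps.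

Definition lim_right_int (g : R -> R) (a b l : R) : Prop :=
  forall eps, 0 < eps -> exists delta, 0 < delta /\
    forall h, 0 < h < delta -> exists v, is_RInt g a (b - h) v /\ Rabs (v - l) < eps.

(* Euler's Gamma function: Gamma(th) = int_0^oo t^(th-1) e^(-t) dt *)
Definition Gamma (th : R) : R :=
  epsilon (inhabits 0) (fun l =>
    forall eps, 0 < eps -> exists delta, 0 < delta /\ exists M,
      forall h X, 0 < h < delta -> M < X ->
        exists v, is_RInt (fun t => Rpower t (th - 1) * exp (- t)) h X v
                  /\ Rabs (v - l) < eps).

(* J^th_{c-} f(x) = 1/Gamma(th) int_x^c (s-x)^(th-1) f(s) ds *)
Definition JL (th c : R) (f : R -> R) (x : R) : R :=
  / Gamma th * epsilon (inhabits 0)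
    (fun l => lim_left_int (fun s => Rpower (s - x) (th - 1) * f s) x c l).

(* J^th_{c+} f(x) = 1/Gamma(th) int_c^x (x-s)^(th-1) f(s) ds *)
Definition JR (th c : R) (f : R -> R) (x : R) : R :=
  / Gamma th * epsilon (inhabits 0)
    (fun l => lim_right_int (fun s => Rpower (x - s) (th - 1) * f s) c x l).

Definition is_interval (I : R -> Prop) : Prop :=
  forall x y z, I x -> I z -> x <= y <= z -> I y.

Definition int_pt (I : R -> Prop) (x : R) : Prop :=
  exists d, 0 < d /\ forall y, Rabs (y - x) < d -> I y.

Definition alpha_m_convex (alpha m : R) (K : R -> Prop) (g : R -> R) : Prop :=
  forall X Y t, K X -> K Y -> 0 <= t <= 1 -> K (t * X + m * (1 - t) * Y) ->
    g (t * X + m * (1 - t) * Y) <= tpow t alpha * g X + m * (1 - tpow t alpha) * g Y.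

Definition HA1 (th lam : R) : R :=
  (2 * th * rpow lam (1 + 1 / th) + 1) / (th + 1) - lam.

Definition HA2 (alpha th lam : R) : R :=
  2 * th * rpow lam (1 + (1 + alpha) / th) / ((alpha + 1) * (alpha + th + 1))
  + 1 / (alpha + th + 1) - lam / (alpha + 1).

Definition HA3 (alpha th lam : R) : R := HA1 th lam - HA2 alpha th lam.

(* Main.v *)
Require Import Defs.
From Stdlib Require Import Reals Lra ClassicalEpsilon.
From Coquelicot Require Import Coquelicot.
Open Scope R_scope.

Lemma Rpower_pos x y : 0 < Rpower x y.
Proof. unfold Rpower; apply exp_pos. Qed.

Lemma d_pow y x : 0 < x -> is_derive (fun t => Rpower t y) x (y * Rpower x (y-1)).
Proof. intros; apply is_derive_Reals, derivable_pt_lim_power; auto. Qed.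

Lemma d_plus (f g : R -> R) (df dg x : R) : is_derive f x df -> is_derive g x dg ->
  is_derive (fun t => f t + g t) x (df + dg).
Proof. intros; apply (is_derive_plus f g); auto. Qed.
Lemma d_minus (f g : R -> R) (df dg x : R) : is_derive f x df -> is_derive g x dg ->
  is_derive (fun t => f t - g t) x (df - dg).
Proof. intros; apply (is_derive_minus f g); auto. Qed.
Lemma d_mult (f g : R -> R) (df dg x : R) : is_derive f x df -> is_derive g x dg ->
  is_derive (fun t => f t * g t) x (df * g x + f x * dg).
Proof. intros. apply (is_derive_mult f g); auto. intros; apply Rmult_comm. Qed.
Lemma d_scal (k : R) (f : R -> R) (df x : R) : is_derive f x df -> is_derive (fun t => k * f t) x (k * df).
Proof. intros. apply (is_derive_scal f); auto. Qed.
Lemma d_const (k x : R) : is_derive (fun _ : R => k) x 0.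
Proof. apply is_derive_Reals, derivable_pt_lim_const. Qed.
Lemma d_id (x : R) : is_derive (fun t => t) x 1.
Proof. apply is_derive_Reals, derivable_pt_lim_id. Qed.
Lemma d_ext (f g : R -> R) (x d : R) : (forall t, f t = g t) -> is_derive f x d -> is_derive g x d.
Proof. intros H; apply is_derive_ext; auto. Qed.
Lemma d_eqv (f : R -> R) (x d d' : R) : d = d' -> is_derive f x d -> is_derive f x d'.
Proof. intros ->; auto. Qed.

Lemma mono_inc (g g' : R -> R) (x y : R) : x <= y ->
  (forall t, x <= t <= y -> is_derive g t (g' t)) ->
  (forall t, x < t < y -> 0 <= g' t) -> g x <= g y.
Proof.
  intros Hxy Hd Hp. destruct Hxy as [Hlt|Heq]; [|subst; lra].
  destruct (MVT_cor2 g g' x y Hlt) as [c [Hc1 Hc2]].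
  - intros c Hc; apply is_derive_Reals; auto.
  - assert (0 <= g' c) by (apply Hp; lra).
    assert (0 <= g' c * (y - x)) by (apply Rmult_le_pos; lra). lra.
Qed.

Lemma Rpower_small th eta : 0 < th -> 0 < eta ->
  exists d, 0 < d <= 1 /\ forall x, 0 < x < d -> Rpower x th < eta.
Proof.
  intros Hth He. exists (Rmin 1 (Rpower eta (/th))). split.
  - split; [apply Rmin_glb_lt; [lra| apply Rpower_pos]| apply Rmin_l].
  - intros x Hx. assert (x < Rpower eta (/th)).
    { eapply Rlt_le_trans; [apply Hx| apply Rmin_r]. }
    replace eta with (Rpower (Rpower eta (/th)) th).
    + apply Rlt_Rpower_l; lra.
    + rewrite Rpower_mult. rewrite Rinv_l by lra. apply Rpower_1; auto.
Qed.

Lemma abs_le_inv x b : Rabs x <= b -> -b <= x <= b.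
Proof. unfold Rabs; destruct Rcase_abs; lra. Qed.
Lemma abs_lt_inv x b : Rabs x < b -> -b < x < b.
Proof. unfold Rabs; destruct Rcase_abs; lra. Qed.

Lemma Rpower_1_base x : Rpower 1 x = 1.
Proof. unfold Rpower. rewrite ln_1, Rmult_0_r. apply exp_0. Qed.

Lemma Rpower_le1 t a : 0 < t <= 1 -> 0 <= a -> Rpower t a <= 1.
Proof. intros. rewrite <- (Rpower_1_base a). apply Rle_Rpower_l; lra. Qed.

Lemma Rpower_le_self t y : 0 < t <= 1 -> 1 <= y -> Rpower t y <= t.
Proof.
  intros. replace y with (1 + (y-1)) by ring. rewrite Rpower_plus, Rpower_1 by lra.
  assert (Rpower t (y-1) <= 1) by (apply Rpower_le1; lra).
  assert (0 < Rpower t (y-1)) by apply Rpower_pos.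
  nra.
Qed.

Definition Phi (th al la P Q t : R) :=
  P * (la * t - / (th+1) * Rpower t (th+1))
  + Q * (la * / (al+1) * Rpower t (al+1) - / (al+th+1) * Rpower t (al+th+1)).

Lemma dPhi th al la P Q t : 0 < t -> 0 < th -> 0 <= al ->
  is_derive (Phi th al la P Q) t ((la - Rpower t th) * (P + Q * Rpower t al)).
Proof.
  intros Ht Hth Hal. unfold Phi.
  eapply d_eqv; [| apply d_plus; apply d_scal; apply d_minus].
  2: apply d_scal; apply d_id.
  2: apply d_scal; apply d_pow; lra.
  2: apply d_scal; apply d_pow; lra.
  2: apply d_scal; apply d_pow; lra.
  replace (th+1-1) with th by ring. replace (al+1-1) with al by ring.
  replace (al+th+1-1) with (al+th) by ring. rewrite Rpower_plus. field. lra.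
Qed.

Lemma Phi_small th al la P Q e : 0 < th -> 0 <= al -> 0 < la < 1 -> 0 < e <= 1 ->
  Rabs (Phi th al la P Q e) <= 2 * (Rabs P + Rabs Q) * e.
Proof.
  intros. unfold Phi.
  assert (A1: 0 <= Rpower e (th+1) <= e) by (split; [left; apply Rpower_pos| apply Rpower_le_self; lra]).
  assert (A2: 0 <= Rpower e (al+1) <= e) by (split; [left; apply Rpower_pos| apply Rpower_le_self; lra]).
  assert (A3: 0 <= Rpower e (al+th+1) <= e) by (split; [left; apply Rpower_pos| apply Rpower_le_self; lra]).
  assert (I1: 0 < / (th+1) <= 1) by (split; [apply Rinv_0_lt_compat; lra| rewrite <- Rinv_1; apply Rinv_le_contravar; lra]).
  assert (I2: 0 < / (al+1) <= 1) by (split; [apply Rinv_0_lt_compat; lra| rewrite <- Rinv_1; apply Rinv_le_contravar; lra]).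
  assert (I3: 0 < / (al+th+1) <= 1) by (split; [apply Rinv_0_lt_compat; lra| rewrite <- Rinv_1; apply Rinv_le_contravar; lra]).
  set (x1 := la * e - / (th + 1) * Rpower e (th + 1)).
  set (x2 := la * / (al + 1) * Rpower e (al + 1) - / (al + th + 1) * Rpower e (al + th + 1)).
  assert (Rabs x1 <= 2*e).
  { unfold x1. assert (/ (th+1) * Rpower e (th+1) <= e) by nra.
    assert (0 <= / (th+1) * Rpower e (th+1)) by nra. assert (la*e <= e) by nra.
    assert (0 <= la * e) by nra. apply Rabs_le. split; lra. }
  assert (Rabs x2 <= 2*e).
  { unfold x2. assert (/ (al+th+1) * Rpower e (al+th+1) <= e) by nra.
    assert (0 <= / (al+th+1) * Rpower e (al+th+1)) by nra.
    assert (0 <= la * / (al + 1)) by nra. assert (la * / (al + 1) <= 1) by nra.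
    assert (la * / (al + 1) * Rpower e (al + 1) <= e) by nra.
    assert (0 <= la * / (al + 1) * Rpower e (al + 1)) by nra.
    apply Rabs_le. split; lra. }
  eapply Rle_trans; [apply Rabs_triang|]. rewrite !Rabs_mult.
  assert (0 <= Rabs P) by apply Rabs_pos. assert (0 <= Rabs Q) by apply Rabs_pos.
  nra.
Qed.

Lemma ball_R (t r y : R) : ball t r y -> Rabs (y - t) < r.
Proof. unfold ball; simpl; unfold AbsRing_ball; simpl; unfold abs, minus, plus, opp; simpl. auto. Qed.

Lemma cont_of_der (f : R -> R) (x d : R) : is_derive f x d -> continuous f x.
Proof. intros H. apply continuity_pt_filterlim, derivable_continuous_pt. exists d. apply is_derive_Reals; auto. Qed.

Lemma dRInt (G : R -> R) (e t lo hi : R) : lo < e < hi -> lo < t < hi ->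
  (forall z, lo < z < hi -> continuous G z) ->
  is_derive (fun x => RInt G e x) t (G t).
Proof.
  intros He Ht HG. apply (is_derive_RInt G (fun x => RInt G e x) e t).
  - assert (Hr: 0 < Rmin (t-lo) (hi-t)) by (apply Rmin_glb_lt; lra).
    exists (mkposreal _ Hr). intros y Hy. apply ball_R in Hy. simpl in Hy.
    assert (Rabs (y-t) < t - lo) by (eapply Rlt_le_trans; [apply Hy| apply Rmin_l]).
    assert (Rabs (y-t) < hi - t) by (eapply Rlt_le_trans; [apply Hy| apply Rmin_r]).
    apply Rabs_def2 in H. apply Rabs_def2 in H0.
    apply (RInt_correct (V:=R_CompleteNormedModule)). apply (ex_RInt_continuous (V:=R_CompleteNormedModule)). intros z Hz.
    apply HG. split.
    + eapply Rlt_le_trans; [|apply Hz]. apply Rmin_glb_lt; lra.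
    + eapply Rle_lt_trans; [apply Hz|]. apply Rmax_lub_lt; lra.
  - apply HG; auto.
Qed.

Lemma t0_facts th la : 0 < th -> 0 < la < 1 ->
  0 < Rpower la (/th) < 1 /\ Rpower (Rpower la (/th)) th = la.
Proof.
  intros. split; [split|].
  - apply Rpower_pos.
  - rewrite <- (Rpower_1_base (/th)). apply Rlt_Rpower_l; [apply Rinv_0_lt_compat|]; lra.
  - rewrite Rpower_mult, Rinv_l by lra. apply Rpower_1; lra.
Qed.

Lemma core_main (F F' : R -> R) (th al la P Q e : R) :
  0 < th -> 0 <= al -> 0 < la < 1 ->
  (forall t, 0 <= t < 2 -> is_derive F t (F' t)) ->
  (forall t, 0 < t < 1 -> Rabs (F' t) <= P + Q * Rpower t al) ->
  0 < e <= Rpower la (/th) ->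
  Rabs (((1-la) * F 1 - RInt (fun s => th * Rpower s (th-1) * F s) e 1)
        - (Rpower e th - la) * F e)
  <= 2 * Phi th al la P Q (Rpower la (/th)) - Phi th al la P Q 1 - Phi th al la P Q e.
Proof.
  intros Hth Hal Hla HF HB He.
  destruct (t0_facts th la Hth Hla) as [Ht0 Ht0p].
  set (t0 := Rpower la (/th)) in *.
  set (G := fun s => th * Rpower s (th-1) * F s).
  assert (HGc : forall z, 0 < z < 2 -> continuous G z).
  { intros z Hz. eapply cont_of_der.
    unfold G. apply d_mult; [apply d_scal, d_pow; lra| apply HF; lra]. }
  set (Rc := fun t => (Rpower t th - la) * F t - RInt G e t).
  assert (dRc : forall t, e <= t <= 1 -> is_derive Rc t ((Rpower t th - la) * F' t)).
  { intros t Ht. unfold Rc. eapply d_eqv; [| apply d_minus; [apply d_mult; [apply d_minus; [apply d_pow; lra| apply d_const]| apply HF; lra] | apply (dRInt G e t 0 2); [lra|lra|auto]]].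
    unfold G. ring. }
  set (Ph := Phi th al la P Q).
  assert (dPh : forall t, e <= t <= 1 -> is_derive Ph t ((la - Rpower t th) * (P + Q * Rpower t al))).
  { intros t Ht. apply dPhi; lra. }
  assert (wneg : forall t, 0 < t <= t0 -> Rpower t th <= la).
  { intros t Ht. rewrite <- Ht0p. apply Rle_Rpower_l; lra. }
  assert (wpos : forall t, t0 <= t -> la <= Rpower t th).
  { intros t Ht. rewrite <- Ht0p. apply Rle_Rpower_l; lra. }
  assert (Bd : forall t, 0 < t < 1 -> - (P + Q * Rpower t al) <= F' t <= P + Q * Rpower t al).
  { intros t Ht. specialize (HB t Ht). apply abs_le_inv in HB. lra. }
  assert (M1 : Rc e + Ph e <= Rc t0 + Ph t0).
  { apply (mono_inc (fun t => Rc t + Ph t) (fun t => (Rpower t th - la) * F' t + (la - Rpower t th) * (P + Q * Rpower t al))).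
    - lra.
    - intros t Ht. apply d_plus; [apply dRc| apply dPh]; lra.
    - intros t Ht. assert (Rpower t th <= la) by (apply wneg; lra).
      assert (F' t <= P + Q * Rpower t al) by (apply Bd; lra). nra. }
  assert (M2 : Ph e - Rc e <= Ph t0 - Rc t0).
  { apply (mono_inc (fun t => Ph t - Rc t) (fun t => (la - Rpower t th) * (P + Q * Rpower t al) - (Rpower t th - la) * F' t)).
    - lra.
    - intros t Ht. apply d_minus; [apply dPh| apply dRc]; lra.
    - intros t Ht. assert (Rpower t th <= la) by (apply wneg; lra).
      assert (- (P + Q * Rpower t al) <= F' t) by (apply Bd; lra). nra. }
  assert (M3 : - Rc t0 - Ph t0 <= - Rc 1 - Ph 1).
  { apply (mono_inc (fun t => - Rc t - Ph t) (fun t => - ((Rpower t th - la) * F' t) - (la - Rpower t th) * (P + Q * Rpower t al))).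
    - lra.
    - intros t Ht. apply d_minus; [apply (is_derive_opp Rc)|apply dPh; lra]. apply dRc; lra.
    - intros t Ht. assert (la <= Rpower t th) by (apply wpos; lra).
      assert (F' t <= P + Q * Rpower t al) by (apply Bd; lra). nra. }
  assert (M4 : Rc t0 - Ph t0 <= Rc 1 - Ph 1).
  { apply (mono_inc (fun t => Rc t - Ph t) (fun t => (Rpower t th - la) * F' t - (la - Rpower t th) * (P + Q * Rpower t al))).
    - lra.
    - intros t Ht. apply d_minus; [apply dRc| apply dPh]; lra.
    - intros t Ht. assert (la <= Rpower t th) by (apply wpos; lra).
      assert (- (P + Q * Rpower t al) <= F' t) by (apply Bd; lra). nra. }
  assert (R1 : Rc 1 = (1-la) * F 1 - RInt G e 1).
  { unfold Rc. rewrite Rpower_1_base. ring. }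
  assert (Re : Rc e = (Rpower e th - la) * F e).
  { unfold Rc. rewrite RInt_point. unfold zero; simpl. ring. }
  fold G. rewrite <- R1, <- Re. apply Rabs_le. unfold Ph in *. lra.
Qed.

Lemma core (F F' : R -> R) (th al la P Q L : R) :
  0 < th -> 0 <= al -> 0 < la < 1 ->
  (forall t, 0 <= t < 2 -> is_derive F t (F' t)) ->
  (forall t, 0 < t < 1 -> Rabs (F' t) <= P + Q * Rpower t al) ->
  (forall eta, 0 < eta -> exists d, 0 < d /\ forall e, 0 < e < d ->
      Rabs (RInt (fun s => th * Rpower s (th-1) * F s) e 1 - L) < eta) ->
  Rabs ((1-la) * F 1 + la * F 0 - L)
  <= 2 * Phi th al la P Q (Rpower la (/th)) - Phi th al la P Q 1.
Proof.
  intros Hth Hal Hla HF HB HL.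
  destruct (t0_facts th la Hth Hla) as [Ht0 Ht0p].
  set (t0 := Rpower la (/th)) in *.
  set (Bd := 2 * Phi th al la P Q t0 - Phi th al la P Q 1).
  set (E := (1-la) * F 1 + la * F 0 - L).
  destruct (Rle_or_lt (Rabs E) Bd) as [H|H]; [exact H| exfalso].
  set (D0 := Rabs E - Bd).
  assert (HD0 : 0 < D0) by (unfold D0; lra).
  set (B := Rabs P + Rabs Q).
  assert (HBp : 0 <= B) by (unfold B; pose proof (Rabs_pos P); pose proof (Rabs_pos Q); lra).
  assert (HFB : forall t, 0 < t < 1 -> Rabs (F' t) <= B).
  { intros t Ht. eapply Rle_trans; [apply HB; auto|].
    assert (0 < Rpower t al <= 1) by (split; [apply Rpower_pos| apply Rpower_le1; lra]).
    unfold B. pose proof (Rle_abs P). pose proof (Rle_abs Q). pose proof (Rabs_pos Q).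
    assert (Q * Rpower t al <= Rabs Q * Rpower t al) by (apply Rmult_le_compat_r; lra).
    nra. }
  assert (Lip : forall e, 0 < e < 1 -> Rabs (F e - F 0) <= B * e).
  { intros e He. destruct (MVT_cor2 F F' 0 e) as [c [Hc1 Hc2]]; [lra| |].
    - intros c Hc. apply is_derive_Reals, HF. lra.
    - rewrite Hc1, Rabs_mult, (Rabs_right (e - 0)) by lra.
      replace (e - 0) with e by ring. apply Rmult_le_compat_r; [lra|]. apply HFB; lra. }
  destruct (HL (D0/4)) as [d1 [Hd1 Hd1']]; [lra|].
  destruct (Rpower_small th (D0 / (4 * (Rabs (F 0) + B + 1)))) as [d2 [Hd2 Hd2']]; auto.
  { apply Rdiv_lt_0_compat; [lra|]. pose proof (Rabs_pos (F 0)). lra. }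
  set (e := Rmin (Rmin (d1/2) (d2/2)) (Rmin (Rmin t0 (1/2)) (D0 / (12 * (B+1))))).
  assert (He0 : 0 < e).
  { unfold e. repeat apply Rmin_glb_lt; try lra. apply Rdiv_lt_0_compat; lra. }
  assert (He1 : e <= d1/2) by (unfold e; eapply Rle_trans; apply Rmin_l).
  assert (He2 : e <= d2/2) by (unfold e; eapply Rle_trans; [apply Rmin_l| apply Rmin_r]).
  assert (He3 : e <= t0) by (unfold e; eapply Rle_trans; [apply Rmin_r| eapply Rle_trans; apply Rmin_l]).
  assert (He4 : e <= 1/2) by (unfold e; eapply Rle_trans; [apply Rmin_r| eapply Rle_trans; [apply Rmin_l| apply Rmin_r]]).
  assert (He5 : e <= D0 / (12 * (B+1))) by (unfold e; eapply Rle_trans; [apply Rmin_r| apply Rmin_r]).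
  pose proof (core_main F F' th al la P Q e Hth Hal Hla HF HB (conj He0 He3)) as CM.
  fold t0 in CM.
  set (N := RInt (fun s => th * Rpower s (th-1) * F s) e 1) in *.
  assert (HN : Rabs (N - L) < D0/4) by (apply Hd1'; lra).
  assert (Hp : Rpower e th < D0 / (4 * (Rabs (F 0) + B + 1))) by (apply Hd2'; lra).
  assert (HPh : Rabs (Phi th al la P Q e) <= 2 * B * e) by (apply Phi_small; lra).
  assert (HL2 : Rabs (F e - F 0) <= B * e) by (apply Lip; lra).
  assert (HFe : Rabs (F e) <= Rabs (F 0) + B) .
  { replace (F e) with ((F e - F 0) + F 0) by ring.
    eapply Rle_trans; [apply Rabs_triang|]. nra. }
  assert (Hp0 : 0 < Rpower e th) by apply Rpower_pos.
  assert (Hw : Rabs ((Rpower e th - la) * F e + la * F 0) <= Rpower e th * (Rabs (F 0) + B) + B * e).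
  { replace ((Rpower e th - la) * F e + la * F 0) with (Rpower e th * F e + (- la) * (F e - F 0)) by ring.
    eapply Rle_trans; [apply Rabs_triang|]. rewrite !Rabs_mult, Rabs_Ropp, (Rabs_right la), (Rabs_right (Rpower e th)) by lra.
    assert (Rpower e th * Rabs (F e) <= Rpower e th * (Rabs (F 0) + B)) by (apply Rmult_le_compat_l; lra).
    assert (la * Rabs (F e - F 0) <= B * e).
    { pose proof (Rabs_pos (F e - F 0)). nra. }
    lra. }
  assert (T1 : Rpower e th * (Rabs (F 0) + B) < D0/4).
  { pose proof (Rabs_pos (F 0)).
    apply Rle_lt_trans with (Rpower e th * (Rabs (F 0) + B + 1)); [nra|].
    replace (D0/4) with (D0 / (4 * (Rabs (F 0) + B + 1)) * (Rabs (F 0) + B + 1)) by (field; lra).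
    apply Rmult_lt_compat_r; lra. }
  assert (T2 : 3 * B * e < D0/4).
  { apply Rle_lt_trans with (3 * B * (D0 / (12 * (B+1)))).
    - apply Rmult_le_compat_l; lra.
    - apply Rmult_lt_reg_r with (12 * (B+1)); [lra|].
      field_simplify; [|lra]. nra. }
  assert (Rabs E <= Bd - Phi th al la P Q e + D0/4 + (Rpower e th * (Rabs (F 0) + B) + B * e)).
  { replace E with (((1 - la) * F 1 - N - (Rpower e th - la) * F e) + (N - L) + ((Rpower e th - la) * F e + la * F 0)) by (unfold E; ring).
    eapply Rle_trans; [apply Rabs_triang|]. eapply Rle_trans; [apply Rplus_le_compat_r; apply Rabs_triang|].
    unfold Bd. lra. }
  apply abs_le_inv in HPh. unfold D0 in *. lra.
Qed.

Lemma Phi_closed th al la P Q : 0 < th -> 0 <= al -> 0 < la < 1 ->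
  2 * Phi th al la P Q (Rpower la (/th)) - Phi th al la P Q 1
  = P * HA1 th la + Q * HA2 al th la.
Proof.
  intros Hth Hal Hla.
  destruct (t0_facts th la Hth Hla) as [Ht0 Ht0p].
  set (t0 := Rpower la (/th)) in *.
  assert (X1 : Rpower la (1 + 1/th) = la * t0).
  { replace (1 + 1/th) with (1 + /th) by (unfold Rdiv; ring).
    rewrite Rpower_plus, Rpower_1 by lra. reflexivity. }
  assert (X2 : Rpower la (1 + (1+al)/th) = la * Rpower t0 (al+1)).
  { replace (1 + (1+al)/th) with (1 + /th * (al+1)) by (field; lra).
    rewrite Rpower_plus, Rpower_1 by lra. unfold t0. rewrite Rpower_mult. reflexivity. }
  assert (X3 : Rpower t0 (th+1) = la * t0).
  { rewrite Rpower_plus, Rpower_1, Ht0p by lra. reflexivity. }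
  assert (X4 : Rpower t0 (al+th+1) = Rpower t0 (al+1) * la).
  { replace (al + th + 1) with ((al+1) + th) by ring. rewrite Rpower_plus, Ht0p. reflexivity. }
  unfold Phi, HA1, HA2, rpow. destruct (Rlt_dec 0 la); [|lra].
  rewrite !Rpower_1_base, X1, X2, X3, X4.
  field. lra.
Qed.

Lemma RInt_zero (th e : R) : RInt (fun s => th * Rpower s (th-1) * 0) e 1 = 0.
Proof.
  rewrite (RInt_ext (V:=R_CompleteNormedModule) _ (fun _ => 0)).
  2: intros; simpl; ring.
  rewrite RInt_const. unfold scal; simpl; unfold mult; simpl. ring.
Qed.

Lemma core_zero th al la P Q : 0 < th -> 0 <= al -> 0 < la < 1 ->
  (forall t, 0 < t < 1 -> 0 <= P + Q * Rpower t al) ->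
  0 <= P * HA1 th la + Q * HA2 al th la.
Proof.
  intros Hth Hal Hla HPQ. rewrite <- Phi_closed by auto.
  pose proof (core (fun _ => 0) (fun _ => 0) th al la P Q 0 Hth Hal Hla) as H.
  eapply Rle_trans; [apply Rabs_pos|]. replace 0 with ((1-la)*0 + la*0 - 0) at 1 by ring.
  apply H.
  - intros. apply d_const.
  - intros. rewrite Rabs_R0. auto.
  - intros eta Heta. exists 1. split; [lra|]. intros. rewrite RInt_zero. rewrite Rminus_0_r, Rabs_R0. auto.
Qed.

Lemma HA2_nonneg th al : 0 < th -> 0 <= al -> 0 <= HA2 al th (1/3).
Proof.
  intros. replace (HA2 al th (1/3)) with (0 * HA1 th (1/3) + 1 * HA2 al th (1/3)) by ring.
  apply core_zero; try lra. intros. pose proof (Rpower_pos t al). lra.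
Qed.

Lemma HA3_nonneg th al : 0 < th -> 0 <= al -> 0 <= HA3 al th (1/3).
Proof.
  intros. unfold HA3. replace (HA1 th (1/3) - HA2 al th (1/3)) with (1 * HA1 th (1/3) + (-1) * HA2 al th (1/3)) by ring.
  apply core_zero; try lra. intros. assert (Rpower t al <= 1) by (apply Rpower_le1; lra). lra.
Qed.

Lemma HA1_pos th : 0 < th -> 0 < HA1 th (1/3).
Proof.
  intros Hth.
  assert (Hla : 0 < 1/3 < 1) by lra.
  destruct (t0_facts th (1/3) Hth Hla) as [Ht0 Ht0p].
  assert (E1 : HA1 th (1/3) = 2 * th * (1/3) * Rpower (1/3) (/th) / (th+1) + 1/(th+1) - 1/3).
  { unfold HA1, rpow. destruct (Rlt_dec 0 (1/3)); [|lra].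
    replace (1 + 1/th) with (1 + /th) by (unfold Rdiv; ring).
    rewrite Rpower_plus, Rpower_1 by lra. field. lra. }
  rewrite E1. set (t0 := Rpower (1/3) (/th)) in *.
  assert (th * (1 - 2 * t0) < 2).
  { destruct (Rle_or_lt th 2) as [Hl|Hl]; [nra|].
    assert (1/2 < t0).
    { unfold t0, Rpower. replace (1/2) with (exp (ln (1/2))) by (apply exp_ln; lra).
      apply exp_increasing.
      replace (1/3) with (/3) by field. replace (1/2) with (/2) by field.
      rewrite !ln_Rinv by lra.
      assert (ln 3 < 2 * ln 2).
      { replace (2 * ln 2) with (ln (2*2)) by (rewrite ln_mult; lra).
        apply ln_increasing; lra. }
      assert (0 < ln 2) by (rewrite <- ln_1; apply ln_increasing; lra).
      assert (0 < ln 3) by (rewrite <- ln_1; apply ln_increasing; lra).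
      assert (0 < / th < 1/2).
      { split; [apply Rinv_0_lt_compat; lra|]. replace (1/2) with (/2) by field. apply Rinv_lt_contravar; lra. }
      nra. }
    nra. }
  apply Rmult_lt_reg_r with (3 * (th+1)); [lra|]. field_simplify; [|lra]. nra.
Qed.

Lemma RInt_powM th M u v : 0 < th -> 0 < u -> 0 < v ->
  RInt (fun s => M * (th * Rpower s (th-1))) u v = M * (Rpower v th - Rpower u th).
Proof.
  intros Hth Hu Hv. apply (is_RInt_unique (V:=R_CompleteNormedModule)).
  assert (Hmin : 0 < Rmin u v) by (apply Rmin_glb_lt; lra).
  eapply (is_RInt_ext (V:=R_CompleteNormedModule)); [| 
  replace (M * (Rpower v th - Rpower u th)) with (minus (M * Rpower v th) (M * Rpower u th))
    by (unfold minus, plus, opp; simpl; ring);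
  apply (is_RInt_derive (fun s => M * Rpower s th))].
  - intros; reflexivity.
  - intros x Hx. apply d_scal, d_pow. lra.
  - intros x Hx. eapply cont_of_der. apply d_scal, d_scal, d_pow. lra.
Qed.

Lemma ex_RInt_G (F : R -> R) (th u v : R) :
  0 < u -> 0 < v -> (forall z, Rmin u v <= z <= Rmax u v -> continuous F z) ->
  ex_RInt (fun s => th * Rpower s (th-1) * F s) u v.
Proof.
  intros Hu Hv HF. apply (ex_RInt_continuous (V:=R_CompleteNormedModule)). intros z Hz.
  assert (0 < z) by (eapply Rlt_le_trans; [|apply Hz]; apply Rmin_glb_lt; lra).
  apply (continuous_mult (fun s => th * Rpower s (th-1)) F).
  - eapply cont_of_der. apply d_scal, d_pow. lra.
  - apply HF; auto.
Qed.

Lemma G_bound (F : R -> R) (th M u v : R) : 0 < th -> 0 < u <= v ->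
  (forall z, u <= z <= v -> continuous F z) ->
  (forall z, u <= z <= v -> Rabs (F z) <= M) ->
  Rabs (RInt (fun s => th * Rpower s (th-1) * F s) u v) <= M * (Rpower v th - Rpower u th).
Proof.
  intros Hth Huv HF HM.
  assert (Hc : forall z, Rmin u v <= z <= Rmax u v -> continuous F z).
  { intros z Hz. rewrite Rmin_left, Rmax_right in Hz by lra. auto. }
  assert (Hex := ex_RInt_G F th u v (proj1 Huv) ltac:(lra) Hc).
  assert (HexM : forall M', ex_RInt (fun s => M' * (th * Rpower s (th-1))) u v).
  { intros M'. apply (ex_RInt_continuous (V:=R_CompleteNormedModule)). intros z Hz.
    rewrite Rmin_left, Rmax_right in Hz by lra.
    eapply cont_of_der. apply d_scal, d_scal, d_pow. lra. }
  apply Rabs_le. split.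
  - replace (- (M * (Rpower v th - Rpower u th))) with ((-M) * (Rpower v th - Rpower u th)) by ring.
    rewrite <- RInt_powM by lra. apply RInt_le; auto; [lra|].
    intros x Hx. assert (Hp : 0 < th * Rpower x (th-1)) by (apply Rmult_lt_0_compat; [lra| apply Rpower_pos]).
    specialize (HM x ltac:(lra)). apply abs_le_inv in HM. nra.
  - rewrite <- RInt_powM by lra. apply RInt_le; auto; [lra|].
    intros x Hx. assert (Hp : 0 < th * Rpower x (th-1)) by (apply Rmult_lt_0_compat; [lra| apply Rpower_pos]).
    specialize (HM x ltac:(lra)). apply abs_le_inv in HM. nra.
Qed.

Lemma exist_lim (F : R -> R) (th M : R) : 0 < th ->
  (forall z, 0 <= z <= 1 -> continuous F z) ->
  (forall z, 0 <= z <= 1 -> Rabs (F z) <= M) ->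
  exists L, forall eta, 0 < eta -> exists d, 0 < d /\ forall e, 0 < e < d ->
      Rabs (RInt (fun s => th * Rpower s (th-1) * F s) e 1 - L) < eta.
Proof.
  intros Hth HF HM.
  assert (HM0 : 0 <= M) by (eapply Rle_trans; [apply Rabs_pos| apply (HM 0); lra]).
  set (V := fun e => RInt (fun s => th * Rpower s (th-1) * F s) e 1).
  assert (Hdiff : forall u v, 0 < u <= v -> v <= 1 -> Rabs (V u - V v) <= M * (Rpower v th - Rpower u th)).
  { intros u v Huv Hv. unfold V.
    set (G := fun s => th * Rpower s (th-1) * F s).
    assert (E1 : ex_RInt G u v).
    { apply ex_RInt_G; try lra. intros z Hz. rewrite Rmin_left, Rmax_right in Hz by lra. apply HF; lra. }
    assert (E2 : ex_RInt G v 1).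
    { apply ex_RInt_G; try lra. intros z Hz. rewrite Rmin_left, Rmax_right in Hz by lra. apply HF; lra. }
    assert (Hch : RInt G u 1 = RInt G u v + RInt G v 1).
    { rewrite <- (RInt_Chasles (V:=R_CompleteNormedModule) G u v 1) by auto. reflexivity. }
    rewrite Hch. unfold Rminus. rewrite Rplus_assoc, Rplus_opp_r, Rplus_0_r.
    apply G_bound; auto; intros; [apply HF| apply HM]; lra. }
  assert (Hc : exists y, filterlim V (at_right 0) (locally y)).
  { apply (filterlim_locally_cauchy (F:=at_right 0)). intros eps.
    destruct (Rpower_small th (eps / (M+1))) as [d [Hd Hd']]; auto.
    { apply Rdiv_lt_0_compat; [apply cond_pos| lra]. }
    exists (fun x => 0 < x < d). split.
    - assert (Hdp : 0 < d) by lra. exists (mkposreal d Hdp). intros y Hy Hy0.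
      apply ball_R in Hy. simpl in Hy. apply abs_lt_inv in Hy. lra.
    - intros u v Hu Hv.
      assert (Hpe : 0 < eps) by apply cond_pos.
      assert (Hu' := Hd' u Hu). assert (Hv' := Hd' v Hv).
      assert (Pu := Rpower_pos u th). assert (Pv := Rpower_pos v th).
      assert (Hme : M * (eps/(M+1)) < eps).
      { assert (Hq : M * (eps/(M+1)) = eps * (M / (M+1))) by (field; lra).
        rewrite Hq. assert (M / (M+1) < 1) by (apply Rmult_lt_reg_r with (M+1); [lra|]; field_simplify; lra).
        nra. }
      assert (Key : Rabs (V v - V u) < eps).
      { destruct (Rle_or_lt u v) as [Huv|Huv].
        - rewrite Rabs_minus_sym. eapply Rle_lt_trans; [apply Hdiff; lra|].
          apply Rle_lt_trans with (M * (eps/(M+1))); [|exact Hme].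
          apply Rmult_le_compat_l; lra.
        - eapply Rle_lt_trans; [apply Hdiff; lra|].
          apply Rle_lt_trans with (M * (eps/(M+1))); [|exact Hme].
          apply Rmult_le_compat_l; lra. }
      unfold ball; simpl; unfold AbsRing_ball; simpl; unfold abs, minus, plus, opp; simpl. exact Key. }
  destruct Hc as [L HL]. exists L. intros eta Heta.
  apply filterlim_locally with (eps := mkposreal eta Heta) in HL.
  destruct HL as [d Hd]. exists d. split; [apply cond_pos|].
  intros e He. apply (Hd e).
  - unfold ball; simpl; unfold AbsRing_ball; simpl; unfold abs, minus, plus, opp; simpl.
    rewrite Ropp_0, Rplus_0_r, Rabs_right; lra.
  - lra.
Qed.

Lemma d_lin (u v s : R) : is_derive (fun t => u * t + v) s u.
Proof.
  eapply d_eqv; [| apply d_plus; [apply d_scal, d_id| apply d_const]]. ring.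
Qed.

Lemma cont_pow_lin (u v y s : R) : 0 < u * s + v -> continuous (fun s => Rpower (u * s + v) y) s.
Proof.
  intros H. eapply cont_of_der.
  apply (is_derive_comp (fun t => Rpower t y) (fun t => u * t + v)).
  - apply d_pow; auto.
  - apply d_lin.
Qed.

Lemma ex_RInt_g (f : R -> R) (u v y a b : R) :
  (forall z, Rmin a b <= z <= Rmax a b -> 0 < u * z + v /\ continuous f z) ->
  ex_RInt (fun s => Rpower (u * s + v) y * f s) a b.
Proof.
  intros H. apply (ex_RInt_continuous (V:=R_CompleteNormedModule)). intros z Hz.
  destruct (H z Hz) as [H1 H2].
  apply (continuous_mult (fun s => Rpower (u * s + v) y) f); auto.
  apply cont_pow_lin; auto.
Qed.


Lemma ex_RInt_sc (f : R -> R) (l a b : R) : ex_RInt f a b -> ex_RInt (fun x => l * f x) a b.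
Proof. intros H. apply (ex_RInt_scal (V:=R_NormedModule) f a b l H). Qed.

Lemma link_left (f : R -> R) (th h p e : R) : 0 < th -> 0 < h -> 0 < e <= 1 ->
  (forall z, h * e + p <= z <= h * 1 + p -> continuous f z) ->
  RInt (fun s => th * Rpower s (th-1) * f (h * s + p)) e 1
  = th / Rpower h th * RInt (fun s => Rpower (s - p) (th-1) * f s) (h * e + p) (h * 1 + p).
Proof.
  intros Hth Hh He Hf.
  set (g := fun s => Rpower (s - p) (th-1) * f s).
  assert (Hex : ex_RInt g (h * e + p) (h * 1 + p)).
  { unfold g. apply (ex_RInt_ext (V:=R_NormedModule) (fun s => Rpower (1 * s + - p) (th-1) * f s)).
    - intros; f_equal; f_equal; ring.
    - apply ex_RInt_g. intros z Hz. rewrite Rmin_left, Rmax_right in Hz by nra.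
      split; [nra| apply Hf; auto]. }
  rewrite <- (RInt_comp_lin (V:=R_CompleteNormedModule) g h p e 1 Hex).
  pose proof (ex_RInt_comp_lin (V:=R_NormedModule) g h p e 1 Hex) as Hex2.
  transitivity (RInt (fun y => th / Rpower h th * scal h (g (h * y + p))) e 1).
  - apply (RInt_ext (V:=R_CompleteNormedModule)). intros y Hy.
    rewrite Rmin_left, Rmax_right in Hy by lra.
    unfold g, scal; simpl; unfold mult; simpl.
    replace (h * y + p - p) with (h * y) by ring.
    rewrite <- Rpower_mult_distr by lra.
    assert (Hhp : Rpower h th = Rpower h (th-1) * h).
    { rewrite <- (Rpower_1 h) at 3 by lra. rewrite <- Rpower_plus. f_equal; ring. }
    rewrite Hhp. field. split; [lra|]. pose proof (Rpower_pos h (th-1)); lra.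
  - apply (RInt_scal (V:=R_CompleteNormedModule) (fun y => scal h (g (h * y + p))) e 1 (th / Rpower h th) Hex2).
Qed.

Lemma link_right (f : R -> R) (th h q e : R) : 0 < th -> 0 < h -> 0 < e <= 1 ->
  (forall z, - h * 1 + q <= z <= - h * e + q -> continuous f z) ->
  RInt (fun s => th * Rpower s (th-1) * f (- h * s + q)) e 1
  = th / Rpower h th * RInt (fun s => Rpower (q - s) (th-1) * f s) (- h * 1 + q) (- h * e + q).
Proof.
  intros Hth Hh He Hf.
  set (g := fun s => Rpower (q - s) (th-1) * f s).
  assert (Hex : ex_RInt g (- h * e + q) (- h * 1 + q)).
  { unfold g. apply (ex_RInt_ext (V:=R_NormedModule) (fun s => Rpower (-1 * s + q) (th-1) * f s)).
    - intros; f_equal; f_equal; ring.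
    - apply ex_RInt_g. intros z Hz. rewrite Rmin_right, Rmax_left in Hz by nra.
      split; [nra| apply Hf; auto]. }
  rewrite <- (opp_RInt_swap (V:=R_CompleteNormedModule) g _ _ Hex).
  rewrite <- (RInt_comp_lin (V:=R_CompleteNormedModule) g (-h) q e 1 Hex).
  pose proof (ex_RInt_comp_lin (V:=R_NormedModule) g (-h) q e 1 Hex) as Hex2.
  transitivity (RInt (fun y => (- (th / Rpower h th)) * scal (-h) (g (- h * y + q))) e 1).
  - apply (RInt_ext (V:=R_CompleteNormedModule)). intros y Hy.
    rewrite Rmin_left, Rmax_right in Hy by lra.
    unfold g, scal; simpl; unfold mult; simpl.
    replace (q - (- h * y + q)) with (h * y) by ring.
    rewrite <- Rpower_mult_distr by lra.
    assert (Hhp : Rpower h th = Rpower h (th-1) * h).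
    { rewrite <- (Rpower_1 h) at 3 by lra. rewrite <- Rpower_plus. f_equal; ring. }
    rewrite Hhp. field. split; [lra|]. pose proof (Rpower_pos h (th-1)); lra.
  - transitivity (scal (- (th / Rpower h th)) (RInt (fun y => scal (-h) (g (- h * y + q))) e 1)).
    + apply (RInt_scal (V:=R_CompleteNormedModule) (fun y => scal (-h) (g (- h * y + q))) e 1 (- (th / Rpower h th)) Hex2).
    + unfold scal, opp; simpl; unfold mult; simpl. ring.
Qed.

Lemma isR_of_ex (g : R -> R) a b : ex_RInt g a b -> Defs.is_RInt g a b (RInt g a b).
Proof. intros H. exists (ex_RInt_Reals_0 g a b H). symmetry. apply RInt_Reals. Qed.

Lemma RInt_of_isR (g : R -> R) a b v : Defs.is_RInt g a b v -> RInt g a b = v.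
Proof. intros [pr Hpr]. rewrite <- Hpr. apply RInt_Reals. Qed.

Lemma ex_gL (f : R -> R) th p a b : p < a <= b ->
  (forall z, a <= z <= b -> continuous f z) ->
  ex_RInt (fun s => Rpower (s - p) (th-1) * f s) a b.
Proof.
  intros Hab Hf. apply (ex_RInt_ext (V:=R_NormedModule) (fun s => Rpower (1 * s + - p) (th-1) * f s)).
  - intros; f_equal; f_equal; ring.
  - apply ex_RInt_g. intros z Hz. rewrite Rmin_left, Rmax_right in Hz by lra.
    split; [lra| apply Hf; lra].
Qed.

Lemma ex_gR (f : R -> R) th q a b : a <= b < q ->
  (forall z, a <= z <= b -> continuous f z) ->
  ex_RInt (fun s => Rpower (q - s) (th-1) * f s) a b.
Proof.
  intros Hab Hf. apply (ex_RInt_ext (V:=R_NormedModule) (fun s => Rpower (-1 * s + q) (th-1) * f s)).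
  - intros; f_equal; f_equal; ring.
  - apply ex_RInt_g. intros z Hz. rewrite Rmin_left, Rmax_right in Hz by lra.
    split; [lra| apply Hf; lra].
Qed.

Section Transfer.
Variables (f : R -> R) (th h p : R).
Hypothesis Hth : 0 < th.
Hypothesis Hh : 0 < h.
Hypothesis Hf : forall z, p <= z <= p + h -> continuous f z.

Let GL e := RInt (fun s => th * Rpower s (th-1) * f (h * s + p)) e 1.
Let gL := fun s => Rpower (s - p) (th-1) * f s.

Lemma GL_eq e : 0 < e <= 1 -> GL e = th / Rpower h th * RInt gL (p + h * e) (p + h).
Proof.
  intros He. unfold GL. rewrite link_left by (auto; intros; apply Hf; nra).
  unfold gL. f_equal. f_equal; ring.
Qed.

Lemma left_to_HL l : lim_left_int gL p (p + h) l ->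
  forall eta, 0 < eta -> exists d, 0 < d /\ forall e, 0 < e < d -> Rabs (GL e - th * l / Rpower h th) < eta.
Proof.
  intros Hl eta Heta.
  assert (Hk : 0 < th / Rpower h th) by (apply Rdiv_lt_0_compat; [lra| apply Rpower_pos]).
  destruct (Hl (eta / (th / Rpower h th))) as [d [Hd Hd']].
  { apply Rdiv_lt_0_compat; lra. }
  exists (Rmin 1 (d / h)). split.
  { apply Rmin_glb_lt; [lra| apply Rdiv_lt_0_compat; lra]. }
  intros e He.
  assert (He1 : e <= 1) by (pose proof (Rmin_l 1 (d/h)); lra).
  assert (He2 : e < d / h) by (pose proof (Rmin_r 1 (d/h)); lra).
  destruct (Hd' (h * e)) as [v [Hv1 Hv2]].
  { split; [nra|]. apply Rmult_lt_reg_r with (/h); [apply Rinv_0_lt_compat; lra|].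
    replace (h * e * / h) with e by (field; lra). exact He2. }
  rewrite GL_eq by lra. rewrite (RInt_of_isR _ _ _ _ Hv1).
  replace (th / Rpower h th * v - th * l / Rpower h th) with (th / Rpower h th * (v - l)) by (field; pose proof (Rpower_pos h th); lra).
  rewrite Rabs_mult, (Rabs_right (th / Rpower h th)) by lra.
  apply Rmult_lt_reg_l with (/ (th / Rpower h th)); [apply Rinv_0_lt_compat; lra|].
  rewrite <- Rmult_assoc, Rinv_l, Rmult_1_l by lra.
  replace (/ (th / Rpower h th) * eta) with (eta / (th / Rpower h th)) by (unfold Rdiv; ring). exact Hv2.
Qed.

Lemma left_exists M : (forall z, 0 <= z <= 1 -> Rabs (f (h * z + p)) <= M) ->
  exists l, lim_left_int gL p (p + h) l.
Proof.
  intros HM.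
  destruct (exist_lim (fun z => f (h * z + p)) th M Hth) as [L HL]; auto.
  { intros z Hz. apply (continuous_comp (fun z => h * z + p) f).
    - eapply cont_of_der. apply d_lin.
    - apply Hf. nra. }
  exists (Rpower h th / th * L).
  intros eta Heta.
  assert (Hk : 0 < Rpower h th / th) by (apply Rdiv_lt_0_compat; [apply Rpower_pos| lra]).
  destruct (HL (eta / (Rpower h th / th))) as [d [Hd Hd']].
  { apply Rdiv_lt_0_compat; lra. }
  exists (h * Rmin 1 d). split.
  { apply Rmult_lt_0_compat; [lra| apply Rmin_glb_lt; lra]. }
  intros h' Hh'.
  set (e := h' / h).
  assert (He : 0 < e < Rmin 1 d).
  { unfold e. split; [apply Rdiv_lt_0_compat; lra|].
    apply Rmult_lt_reg_l with h; [lra|]. replace (h * (h'/h)) with h' by (field; lra). lra. }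
  assert (He1 : e <= 1) by (pose proof (Rmin_l 1 d); lra).
  assert (He2 : e < d) by (pose proof (Rmin_r 1 d); lra).
  exists (RInt gL (p + h') (p + h)). split.
  - apply isR_of_ex. unfold gL. apply ex_gL.
    + split; [lra|]. assert (h' = h * e) by (unfold e; field; lra). nra.
    + intros z Hz. apply Hf. lra.
  - specialize (Hd' e (conj (proj1 He) He2)).
    pose proof (GL_eq e (conj (proj1 He) He1)) as HG. unfold GL in HG.
    replace (p + h * e) with (p + h') in HG by (unfold e; field; lra).
    rewrite HG in Hd'.
    set (R0 := RInt gL (p + h') (p + h)) in *.
    replace (R0 - Rpower h th / th * L) with (Rpower h th / th * (th / Rpower h th * R0 - L))
      by (field; pose proof (Rpower_pos h th); lra).
    rewrite Rabs_mult, (Rabs_right (Rpower h th / th)) by lra.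
    apply Rmult_lt_reg_l with (/ (Rpower h th / th)); [apply Rinv_0_lt_compat; lra|].
    rewrite <- Rmult_assoc, Rinv_l, Rmult_1_l by lra.
    replace (/ (Rpower h th / th) * eta) with (eta / (Rpower h th / th)) by (unfold Rdiv; ring). exact Hd'.
Qed.

End Transfer.

Section TransferR.
Variables (f : R -> R) (th h q : R).
Hypothesis Hth : 0 < th.
Hypothesis Hh : 0 < h.
Hypothesis Hf : forall z, q - h <= z <= q -> continuous f z.

Let GL e := RInt (fun s => th * Rpower s (th-1) * f (- h * s + q)) e 1.
Let gL := fun s => Rpower (q - s) (th-1) * f s.

Lemma GR_eq e : 0 < e <= 1 -> GL e = th / Rpower h th * RInt gL (q - h) (q - h * e).
Proof.
  intros He. unfold GL. rewrite link_right by (auto; intros; apply Hf; nra).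
  unfold gL. f_equal. f_equal; ring.
Qed.

Lemma right_to_HL l : lim_right_int gL (q - h) q l ->
  forall eta, 0 < eta -> exists d, 0 < d /\ forall e, 0 < e < d -> Rabs (GL e - th * l / Rpower h th) < eta.
Proof.
  intros Hl eta Heta.
  assert (Hk : 0 < th / Rpower h th) by (apply Rdiv_lt_0_compat; [lra| apply Rpower_pos]).
  destruct (Hl (eta / (th / Rpower h th))) as [d [Hd Hd']].
  { apply Rdiv_lt_0_compat; lra. }
  exists (Rmin 1 (d / h)). split.
  { apply Rmin_glb_lt; [lra| apply Rdiv_lt_0_compat; lra]. }
  intros e He.
  assert (He1 : e <= 1) by (pose proof (Rmin_l 1 (d/h)); lra).
  assert (He2 : e < d / h) by (pose proof (Rmin_r 1 (d/h)); lra).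
  destruct (Hd' (h * e)) as [v [Hv1 Hv2]].
  { split; [nra|]. apply Rmult_lt_reg_r with (/h); [apply Rinv_0_lt_compat; lra|].
    replace (h * e * / h) with e by (field; lra). exact He2. }
  rewrite GR_eq by lra. rewrite (RInt_of_isR _ _ _ _ Hv1).
  replace (th / Rpower h th * v - th * l / Rpower h th) with (th / Rpower h th * (v - l)) by (field; pose proof (Rpower_pos h th); lra).
  rewrite Rabs_mult, (Rabs_right (th / Rpower h th)) by lra.
  apply Rmult_lt_reg_l with (/ (th / Rpower h th)); [apply Rinv_0_lt_compat; lra|].
  rewrite <- Rmult_assoc, Rinv_l, Rmult_1_l by lra.
  replace (/ (th / Rpower h th) * eta) with (eta / (th / Rpower h th)) by (unfold Rdiv; ring). exact Hv2.
Qed.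

Lemma right_exists M : (forall z, 0 <= z <= 1 -> Rabs (f (- h * z + q)) <= M) ->
  exists l, lim_right_int gL (q - h) q l.
Proof.
  intros HM.
  destruct (exist_lim (fun z => f (- h * z + q)) th M Hth) as [L HL]; auto.
  { intros z Hz. apply (continuous_comp (fun z => - h * z + q) f).
    - eapply cont_of_der. apply d_lin.
    - apply Hf. nra. }
  exists (Rpower h th / th * L).
  intros eta Heta.
  assert (Hk : 0 < Rpower h th / th) by (apply Rdiv_lt_0_compat; [apply Rpower_pos| lra]).
  destruct (HL (eta / (Rpower h th / th))) as [d [Hd Hd']].
  { apply Rdiv_lt_0_compat; lra. }
  exists (h * Rmin 1 d). split.
  { apply Rmult_lt_0_compat; [lra| apply Rmin_glb_lt; lra]. }
  intros h' Hh'.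
  set (e := h' / h).
  assert (He : 0 < e < Rmin 1 d).
  { unfold e. split; [apply Rdiv_lt_0_compat; lra|].
    apply Rmult_lt_reg_l with h; [lra|]. replace (h * (h'/h)) with h' by (field; lra). lra. }
  assert (He1 : e <= 1) by (pose proof (Rmin_l 1 d); lra).
  assert (He2 : e < d) by (pose proof (Rmin_r 1 d); lra).
  exists (RInt gL (q - h) (q - h')). split.
  - apply isR_of_ex. unfold gL. apply ex_gR.
    + split; [|lra]. assert (h' = h * e) by (unfold e; field; lra). nra.
    + intros z Hz. apply Hf. lra.
  - specialize (Hd' e (conj (proj1 He) He2)).
    pose proof (GR_eq e (conj (proj1 He) He1)) as HG. unfold GL in HG.
    replace (q - h * e) with (q - h') in HG by (unfold e; field; lra).
    rewrite HG in Hd'.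
    set (R0 := RInt gL (q - h) (q - h')) in *.
    replace (R0 - Rpower h th / th * L) with (Rpower h th / th * (th / Rpower h th * R0 - L))
      by (field; pose proof (Rpower_pos h th); lra).
    rewrite Rabs_mult, (Rabs_right (Rpower h th / th)) by lra.
    apply Rmult_lt_reg_l with (/ (Rpower h th / th)); [apply Rinv_0_lt_compat; lra|].
    rewrite <- Rmult_assoc, Rinv_l, Rmult_1_l by lra.
    replace (/ (Rpower h th / th) * eta) with (eta / (Rpower h th / th)) by (unfold Rdiv; ring). exact Hd'.
Qed.

End TransferR.

Lemma d_expm (t : R) : is_derive (fun s => exp (- s)) t (- exp (- t)).
Proof. auto_derive; auto. ring. Qed.
Lemma d_inv (C t : R) : 0 < t -> is_derive (fun s => - C / s) t (C / (t*t)).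
Proof. intros. auto_derive. lra. field. lra. Qed.

Lemma exp_bound y : exists C, 0 < C /\ forall t, 1 <= t -> Rpower t y * exp (- t) <= C.
Proof.
  destruct (INR_unbounded y) as [N HN].
  exists (INR (Factorial.fact N)). split; [apply lt_0_INR, Factorial.lt_O_fact|].
  intros t Ht.
  assert (H1 : Rpower t y <= t ^ N).
  { rewrite <- Rpower_pow by lra. apply Rle_Rpower; lra. }
  assert (H2 : t ^ N / INR (Factorial.fact N) <= exp t).
  { eapply Rle_trans; [| apply (exp_ge_taylor t N); lra].
    destruct N as [|n].
    - simpl. lra.
    - rewrite tech5. assert (0 <= sum_f_R0 (fun k => t ^ k / INR (Factorial.fact k)) n).
      { apply cond_pos_sum. intros k. apply Rdiv_le_0_compat; [apply pow_le; lra| apply lt_0_INR, Factorial.lt_O_fact]. }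
      lra. }
  assert (Hf : 0 < INR (Factorial.fact N)) by apply lt_0_INR, Factorial.lt_O_fact.
  assert (H3 : t ^ N <= INR (Factorial.fact N) * exp t).
  { apply Rmult_le_reg_r with (/ INR (Factorial.fact N)); [apply Rinv_0_lt_compat; lra|].
    replace (INR (Factorial.fact N) * exp t * / INR (Factorial.fact N)) with (exp t) by (field; lra). exact H2. }
  assert (He : exp t * exp (- t) = 1) by (rewrite <- exp_plus, Rplus_opp_r; apply exp_0).
  assert (0 < exp (-t)) by apply exp_pos.
  assert (Rpower t y * exp (-t) <= INR (Factorial.fact N) * exp t * exp (-t)) by (apply Rmult_le_compat_r; lra).
  rewrite Rmult_assoc, He in H0. lra.
Qed.

Definition kf (th t : R) := Rpower t (th - 1) * exp (- t).

Lemma kf_cont th t : 0 < t -> continuous (kf th) t.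
Proof.
  intros. unfold kf. apply (continuous_mult (fun t => Rpower t (th-1)) (fun t => exp (- t))).
  - eapply cont_of_der. apply d_pow; auto.
  - eapply cont_of_der. apply d_expm.
Qed.

Lemma kf_pos th t : 0 < t -> 0 < kf th t.
Proof. intros. unfold kf. apply Rmult_lt_0_compat; [apply Rpower_pos| apply exp_pos]. Qed.

Lemma kf_ex th a b : 0 < a -> 0 < b -> ex_RInt (kf th) a b.
Proof.
  intros. apply (ex_RInt_continuous (V:=R_CompleteNormedModule)). intros z Hz.
  apply kf_cont. eapply Rlt_le_trans; [|apply Hz]. apply Rmin_glb_lt; lra.
Qed.

Definition GamP (th l : R) : Prop :=
  forall eps, 0 < eps -> exists delta, 0 < delta /\ exists M,
      forall h X, 0 < h < delta -> M < X ->
        exists v, Defs.is_RInt (fun t => Rpower t (th - 1) * exp (- t)) h X v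
                  /\ Rabs (v - l) < eps.

Lemma Gamma_eq th : Gamma th = epsilon (inhabits 0) (GamP th).
Proof. reflexivity. Qed.

Lemma Chasles_R (g : R -> R) a b c : ex_RInt g a b -> ex_RInt g b c ->
  RInt g a c = RInt g a b + RInt g b c.
Proof. intros. symmetry. apply (RInt_Chasles (V:=R_CompleteNormedModule)); auto. Qed.

Lemma GamP_unique th l1 l2 : GamP th l1 -> GamP th l2 -> l1 = l2.
Proof.
  intros H1 H2. destruct (Req_dec l1 l2) as [|Hne]; auto. exfalso.
  assert (He : 0 < Rabs (l1 - l2) / 2) by (apply Rdiv_lt_0_compat; [apply Rabs_pos_lt; lra| lra]).
  destruct (H1 _ He) as [d1 [Hd1 [M1 HM1]]]. destruct (H2 _ He) as [d2 [Hd2 [M2 HM2]]].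
  set (h := Rmin d1 d2 / 2). set (X := Rmax M1 M2 + 1).
  assert (Hh : 0 < h < d1 /\ 0 < h < d2).
  { unfold h. pose proof (Rmin_l d1 d2). pose proof (Rmin_r d1 d2).
    assert (0 < Rmin d1 d2) by (apply Rmin_glb_lt; lra). lra. }
  assert (HX : M1 < X /\ M2 < X) by (unfold X; pose proof (Rmax_l M1 M2); pose proof (Rmax_r M1 M2); lra).
  destruct (HM1 h X (proj1 Hh) (proj1 HX)) as [v1 [Hv1 Hv1']].
  destruct (HM2 h X (proj2 Hh) (proj2 HX)) as [v2 [Hv2 Hv2']].
  apply RInt_of_isR in Hv1. apply RInt_of_isR in Hv2. rewrite Hv1 in Hv2. subst v2.
  assert (Rabs (l1 - l2) <= Rabs (v1 - l1) + Rabs (v1 - l2)).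
  { replace (l1 - l2) with (- (v1 - l1) + (v1 - l2)) by ring.
    eapply Rle_trans; [apply Rabs_triang|]. rewrite Rabs_Ropp. lra. }
  lra.
Qed.

Lemma GamP_pos th l : GamP th l -> 0 < l.
Proof.
  intros Hl.
  set (c0 := RInt (kf th) 1 2).
  assert (Hc0 : 0 < c0).
  { apply RInt_gt_0; [lra| intros; apply kf_pos; lra| intros; apply kf_cont; lra]. }
  destruct (Hl (c0/2)) as [d [Hd [M HM]]]; [lra|].
  set (h := Rmin d 1 / 2). set (X := Rmax M 2 + 1).
  assert (Hh : 0 < h < d /\ h < 1).
  { unfold h. pose proof (Rmin_l d 1). pose proof (Rmin_r d 1).
    assert (0 < Rmin d 1) by (apply Rmin_glb_lt; lra). lra. }
  assert (HX : M < X /\ 2 < X) by (unfold X; pose proof (Rmax_l M 2); pose proof (Rmax_r M 2); lra).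
  destruct (HM h X (proj1 Hh) (proj1 HX)) as [v [Hv Hv']].
  apply RInt_of_isR in Hv. fold (kf th) in Hv.
  assert (Hge : c0 <= v).
  { rewrite <- Hv. rewrite (Chasles_R _ h 1 X) by (apply kf_ex; lra).
    rewrite (Chasles_R _ 1 2 X) by (apply kf_ex; lra).
    assert (0 <= RInt (kf th) h 1) by (apply RInt_ge_0; [lra| apply kf_ex; lra| intros; left; apply kf_pos; lra]).
    assert (0 <= RInt (kf th) 2 X) by (apply RInt_ge_0; [lra| apply kf_ex; lra| intros; left; apply kf_pos; lra]).
    unfold c0. lra. }
  apply abs_lt_inv in Hv'. lra.
Qed.

Lemma IBP th h X : 0 < th -> 0 < h < X ->
  RInt (fun t => Rpower t th * exp (- t)) h X
  = Rpower h th * exp (- h) - Rpower X th * exp (- X) + th * RInt (kf th) h X.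
Proof.
  intros Hth Hh.
  set (u := fun t => - (Rpower t th * exp (- t))).
  set (du := fun t => Rpower t th * exp (- t) - th * kf th t).
  assert (Hdu : is_RInt du h X (minus (u X) (u h))).
  { apply (is_RInt_derive (V:=R_CompleteNormedModule)).
    - intros x Hx. rewrite Rmin_left, Rmax_right in Hx by lra. unfold u, du, kf.
      eapply d_eqv; [| apply (is_derive_opp (fun t => Rpower t th * exp (- t))); apply d_mult; [apply d_pow; lra| apply d_expm]].
      unfold opp; simpl. ring.
    - intros x Hx. rewrite Rmin_left, Rmax_right in Hx by lra. unfold du.
      apply (continuous_minus (V:=R_NormedModule) (fun t => Rpower t th * exp (- t)) (fun t => th * kf th t)).
      + apply (continuous_mult (fun t => Rpower t th) (fun t => exp (- t))).
        * eapply cont_of_der; apply d_pow; lra.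
        * eapply cont_of_der; apply d_expm.
      + apply (continuous_scal_r (V:=R_NormedModule) th (kf th)). apply kf_cont; lra. }
  assert (Hk : is_RInt (fun t => th * kf th t) h X (th * RInt (kf th) h X)).
  { apply (is_RInt_scal (V:=R_NormedModule) (kf th) h X th).
    apply (RInt_correct (V:=R_CompleteNormedModule)). apply kf_ex; lra. }
  pose proof (is_RInt_plus (V:=R_NormedModule) _ _ h X _ _ Hdu Hk) as Hs.
  apply (is_RInt_unique (V:=R_CompleteNormedModule)).
  unfold plus, minus, opp in Hs; simpl in Hs. unfold u in Hs. unfold plus in Hs; simpl in Hs.
  replace (Rpower h th * exp (- h) - Rpower X th * exp (- X) + th * RInt (kf th) h X)
    with (- (Rpower X th * exp (- X)) + - - (Rpower h th * exp (- h)) + th * RInt (kf th) h X)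
    by ring.
  eapply (is_RInt_ext (V:=R_NormedModule)); [| exact Hs].
  intros x _. unfold du, kf. simpl. unfold Rminus. rewrite Rplus_assoc, Rplus_opp_l, Rplus_0_r. reflexivity.
Qed.


Lemma expm_le1 t : 0 <= t -> exp (- t) <= 1.
Proof. intros. rewrite <- exp_0. destruct H; [left; apply exp_increasing; lra| subst; rewrite Ropp_0; lra]. Qed.

Lemma kf_bound th : exists C, 0 < C /\ forall t, 1 <= t -> kf th t <= C / (t * t).
Proof.
  destruct (exp_bound (th+1)) as [C [HC HC']]. exists C. split; auto.
  intros t Ht. specialize (HC' t Ht).
  assert (Hr : Rpower t (th+1) = Rpower t (th-1) * (t*t)).
  { replace (th+1) with ((th-1) + INR 2) by (simpl; ring). rewrite Rpower_plus, Rpower_pow by lra. simpl. ring. }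
  rewrite Hr in HC'. unfold kf. apply Rmult_le_reg_r with (t*t); [nra|].
  replace (C / (t*t) * (t*t)) with C by (field; lra).
  replace (Rpower t (th - 1) * exp (- t) * (t * t)) with (Rpower t (th - 1) * (t * t) * exp (- t)) by ring. exact HC'.
Qed.

Lemma tail_lim th : exists L2, forall eta, 0 < eta -> exists M, forall X, M < X ->
  Rabs (RInt (kf th) 1 X - L2) < eta.
Proof.
  destruct (kf_bound th) as [C [HC HC']].
  set (V := fun X => RInt (kf th) 1 X).
  assert (Hd : forall X1 X2, 1 <= X1 <= X2 -> Rabs (V X2 - V X1) <= C / X1).
  { intros X1 X2 HX. unfold V.
    rewrite (Chasles_R _ 1 X1 X2) by (apply kf_ex; lra).
    replace (RInt (kf th) 1 X1 + RInt (kf th) X1 X2 - RInt (kf th) 1 X1) with (RInt (kf th) X1 X2) by lra.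
    assert (H0 : 0 <= RInt (kf th) X1 X2) by (apply RInt_ge_0; [lra| apply kf_ex; lra| intros; left; apply kf_pos; lra]).
    rewrite Rabs_right by lra.
    assert (Hi : is_RInt (fun t => C / (t*t)) X1 X2 (minus (- C / X2) (- C / X1))).
    { apply (is_RInt_derive (V:=R_CompleteNormedModule) (fun s => - C / s)).
      - intros x Hx. rewrite Rmin_left, Rmax_right in Hx by lra. apply d_inv; lra.
      - intros x Hx. rewrite Rmin_left, Rmax_right in Hx by lra.
        eapply cont_of_der. auto_derive; [nra| reflexivity]. }
    apply (is_RInt_unique (V:=R_CompleteNormedModule)) in Hi.
    unfold minus, plus, opp in Hi; simpl in Hi.
    apply Rle_trans with (RInt (fun t => C / (t*t)) X1 X2).
    - apply RInt_le; [lra| apply kf_ex; lra| |].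
      + apply (ex_RInt_continuous (V:=R_CompleteNormedModule)). intros z Hz.
        rewrite Rmin_left, Rmax_right in Hz by lra. eapply cont_of_der. auto_derive; [nra| reflexivity].
      + intros x Hx. apply HC'; lra.
    - rewrite Hi. assert (0 < C / X2) by (apply Rdiv_lt_0_compat; lra).
      replace (- C / X2 + - (- C / X1)) with (C / X1 - C / X2) by (field; lra). lra. }
  assert (Hc : exists y, filterlim V (Rbar_locally p_infty) (locally y)).
  { apply (filterlim_locally_cauchy (F:=Rbar_locally p_infty)). intros eps.
    assert (Hpe : 0 < eps) by apply cond_pos.
    exists (fun X => Rmax 1 (2 * C / eps) < X). split.
    - exists (Rmax 1 (2 * C / eps)). auto.
    - intros u v Hu Hv.
      assert (H1 : 1 < u /\ 2 * C / eps < u) by (pose proof (Rmax_l 1 (2*C/eps)); pose proof (Rmax_r 1 (2*C/eps)); lra).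
      assert (H2 : 1 < v /\ 2 * C / eps < v) by (pose proof (Rmax_l 1 (2*C/eps)); pose proof (Rmax_r 1 (2*C/eps)); lra).
      assert (Hsm : forall w, 1 < w -> 2 * C / eps < w -> C / w < eps).
      { intros w Hw1 Hw2. apply Rmult_lt_reg_r with w; [lra|].
        replace (C / w * w) with C by (field; lra).
        assert (2 * C < eps * w).
        { apply Rmult_lt_reg_r with (/ eps); [apply Rinv_0_lt_compat; lra|].
          replace (eps * w * / eps) with w by (field; lra). exact Hw2. }
        lra. }
      assert (Key : Rabs (V v - V u) < eps).
      { destruct (Rle_or_lt u v) as [Huv|Huv].
        - eapply Rle_lt_trans; [apply Hd; lra| apply Hsm; lra].
        - rewrite Rabs_minus_sym. eapply Rle_lt_trans; [apply Hd; lra| apply Hsm; lra]. }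
      unfold ball; simpl; unfold AbsRing_ball; simpl; unfold abs, minus, plus, opp; simpl. exact Key. }
  destruct Hc as [L HL]. exists L. intros eta Heta.
  apply filterlim_locally with (eps := mkposreal eta Heta) in HL.
  destruct HL as [M HM]. exists M. intros X HX. specialize (HM X HX).
  apply ball_R in HM. exact HM.
Qed.

Lemma GamP_exists th : 0 < th -> exists l, GamP th l.
Proof.
  intros Hth.
  destruct (exist_lim (fun s => exp (- s) / th) th (1 / th) Hth) as [L1 HL1].
  { intros z Hz. apply (continuous_mult (fun s => exp (- s)) (fun _ => / th)).
    - eapply cont_of_der. apply d_expm.
    - apply continuous_const. }
  { intros z Hz. rewrite Rabs_right.
    - unfold Rdiv. apply Rmult_le_compat_r; [left; apply Rinv_0_lt_compat; lra| apply expm_le1; lra].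
    - left. apply Rdiv_lt_0_compat; [apply exp_pos| lra]. }
  destruct (tail_lim th) as [L2 HL2].
  exists (L1 + L2). intros eps Heps.
  destruct (HL1 (eps/2)) as [d1 [Hd1 Hd1']]; [lra|].
  destruct (HL2 (eps/2)) as [M2 HM2]; [lra|].
  exists (Rmin d1 1). split; [apply Rmin_glb_lt; lra|].
  exists (Rmax M2 1). intros h X Hh HX.
  assert (Hh1 : h < d1 /\ h < 1) by (pose proof (Rmin_l d1 1); pose proof (Rmin_r d1 1); lra).
  assert (HX1 : M2 < X /\ 1 < X) by (pose proof (Rmax_l M2 1); pose proof (Rmax_r M2 1); lra).
  exists (RInt (kf th) h X). split.
  - apply (isR_of_ex (kf th)). apply kf_ex; lra.
  - rewrite (Chasles_R _ h 1 X) by (apply kf_ex; lra).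
    assert (E1 : RInt (fun s => th * Rpower s (th - 1) * (exp (- s) / th)) h 1 = RInt (kf th) h 1).
    { apply (RInt_ext (V:=R_CompleteNormedModule)). intros. unfold kf. simpl. field. lra. }
    specialize (Hd1' h (conj (proj1 Hh) (proj1 Hh1))). rewrite E1 in Hd1'.
    specialize (HM2 X (proj1 HX1)).
    apply abs_lt_inv in Hd1'. apply abs_lt_inv in HM2. apply Rabs_def1; lra.
Qed.

Lemma GamP_step th l : 0 < th -> GamP th l -> GamP (th + 1) (th * l).
Proof.
  intros Hth Hl eps Heps.
  destruct (Hl (eps / (3 * th))) as [d1 [Hd1 [M1 HM1]]].
  { apply Rdiv_lt_0_compat; lra. }
  destruct (Rpower_small th (eps / 3)) as [d2 [Hd2 Hd2']]; [lra| lra|].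
  destruct (exp_bound (th + 1)) as [C [HC HC']].
  exists (Rmin d1 d2). split; [apply Rmin_glb_lt; lra|].
  exists (Rmax M1 (Rmax 1 (3 * C / eps))). intros h X Hh HX.
  assert (Hh1 : h < d1 /\ h < d2) by (pose proof (Rmin_l d1 d2); pose proof (Rmin_r d1 d2); lra).
  assert (HX1 : M1 < X /\ 1 < X /\ 3 * C / eps < X).
  { pose proof (Rmax_l M1 (Rmax 1 (3 * C / eps))). pose proof (Rmax_r M1 (Rmax 1 (3 * C / eps))).
    pose proof (Rmax_l 1 (3 * C / eps)). pose proof (Rmax_r 1 (3 * C / eps)). lra. }
  destruct (HM1 h X (conj (proj1 Hh) (proj1 Hh1)) (proj1 HX1)) as [v1 [Hv1 Hv1']].
  apply RInt_of_isR in Hv1. fold (kf th) in Hv1.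
  assert (Hd2h : h < 1) by lra.
  exists (RInt (fun t => Rpower t th * exp (- t)) h X). split.
  - replace (th + 1 - 1) with th by ring. apply isR_of_ex.
    apply (ex_RInt_continuous (V:=R_CompleteNormedModule)). intros z Hz.
    rewrite Rmin_left, Rmax_right in Hz by lra.
    apply (continuous_mult (fun t => Rpower t th) (fun t => exp (- t))).
    + eapply cont_of_der; apply d_pow; lra.
    + eapply cont_of_der; apply d_expm.
  - rewrite IBP by lra. rewrite Hv1.
    assert (T1 : 0 < Rpower h th * exp (- h) < eps / 3).
    { split; [apply Rmult_lt_0_compat; [apply Rpower_pos| apply exp_pos]|].
      pose proof (expm_le1 h ltac:(lra)). pose proof (Rpower_pos h th).
      pose proof (Hd2' h (conj (proj1 Hh) (proj2 Hh1))). pose proof (exp_pos (-h)). nra. }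
    assert (T2 : 0 < Rpower X th * exp (- X) < eps / 3).
    { split; [apply Rmult_lt_0_compat; [apply Rpower_pos| apply exp_pos]|].
      specialize (HC' X ltac:(lra)).
      rewrite Rpower_plus, Rpower_1 in HC' by lra.
      assert (Hb : Rpower X th * exp (- X) <= C / X).
      { apply Rmult_le_reg_r with X; [lra|]. replace (C / X * X) with C by (field; lra).
        replace (Rpower X th * exp (- X) * X) with (Rpower X th * X * exp (- X)) by ring. exact HC'. }
      eapply Rle_lt_trans; [exact Hb|].
      apply Rmult_lt_reg_r with X; [lra|]. replace (C / X * X) with C by (field; lra).
      assert (3 * C < eps * X).
      { apply Rmult_lt_reg_r with (/ eps); [apply Rinv_0_lt_compat; lra|].
        replace (eps * X * / eps) with X by (field; lra). lra. }
      lra. }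
    assert (T3 : Rabs (th * v1 - th * l) < eps / 3).
    { rewrite <- Rmult_minus_distr_l, Rabs_mult, (Rabs_right th) by lra.
      apply Rmult_lt_reg_l with (/ th); [apply Rinv_0_lt_compat; lra|].
      rewrite <- Rmult_assoc, Rinv_l, Rmult_1_l by lra.
      replace (/ th * (eps / 3)) with (eps / (3 * th)) by (field; lra). exact Hv1'. }
    apply abs_lt_inv in T3. apply Rabs_def1; lra.
Qed.

Lemma Gamma_facts th : 0 < th -> 0 < Gamma th /\ Gamma (th + 1) = th * Gamma th.
Proof.
  intros Hth. rewrite !Gamma_eq.
  destruct (GamP_exists th Hth) as [l Hl].
  pose proof (epsilon_spec (inhabits 0) (GamP th) (ex_intro _ l Hl)) as H0.
  pose proof (GamP_step _ _ Hth H0) as H1.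
  pose proof (epsilon_spec (inhabits 0) (GamP (th+1)) (ex_intro _ _ H1)) as H2.
  split; [apply (GamP_pos th); auto|].
  apply (GamP_unique (th+1)); auto.
Qed.

Lemma pow_tangent q K z : 1 <= q -> 0 < K -> 0 < z ->
  Rpower K q + q * Rpower K (q-1) * (z - K) <= Rpower z q.
Proof.
  intros Hq HK Hz.
  set (phi := fun x => Rpower x q - q * Rpower K (q-1) * x).
  assert (Hd : forall x, 0 < x -> is_derive phi x (q * Rpower x (q-1) - q * Rpower K (q-1))).
  { intros x Hx. unfold phi. eapply d_eqv; [| apply d_minus; [apply d_pow; lra| apply d_scal, d_id]]. ring. }
  assert (phi K <= phi z).
  { destruct (Rle_or_lt K z) as [Hl|Hl].
    - apply (mono_inc phi (fun x => q * Rpower x (q-1) - q * Rpower K (q-1))); auto.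
      + intros t Ht. apply Hd; lra.
      + intros t Ht. assert (Rpower K (q-1) <= Rpower t (q-1)) by (apply Rle_Rpower_l; lra).
        assert (0 <= q * (Rpower t (q-1) - Rpower K (q-1))) by (apply Rmult_le_pos; lra). lra.
    - apply Ropp_le_cancel.
      apply (mono_inc (fun x => - phi x) (fun x => - (q * Rpower x (q-1) - q * Rpower K (q-1)))); [lra| |].
      + intros t Ht. apply (is_derive_opp phi). apply Hd; lra.
      + intros t Ht. assert (Rpower t (q-1) <= Rpower K (q-1)) by (apply Rle_Rpower_l; lra).
        assert (0 <= q * (Rpower K (q-1) - Rpower t (q-1))) by (apply Rmult_le_pos; lra). lra. }
  unfold phi in H. lra.
Qed.

Lemma young q K z : 1 <= q -> 0 < K -> 0 <= z ->
  z <= (1 - 1/q) * K + (1/q) * Rpower K (1-q) * rpow z q.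
Proof.
  intros Hq HK Hz. unfold rpow. destruct (Rlt_dec 0 z) as [Hz'|Hz'].
  - pose proof (pow_tangent q K z Hq HK Hz') as T.
    assert (HP : 0 < Rpower K (1-q)) by apply Rpower_pos.
    assert (E1 : Rpower K (1-q) * Rpower K q = K).
    { rewrite <- Rpower_plus. replace (1 - q + q) with 1 by ring. apply Rpower_1; lra. }
    assert (E2 : Rpower K (1-q) * Rpower K (q-1) = 1).
    { rewrite <- Rpower_plus. replace (1 - q + (q-1)) with 0 by ring. apply Rpower_O; lra. }
    assert (Rpower K (1-q) * (Rpower K q + q * Rpower K (q - 1) * (z - K)) <= Rpower K (1-q) * Rpower z q)
      by (apply Rmult_le_compat_l; lra).
    replace (Rpower K (1-q) * (Rpower K q + q * Rpower K (q - 1) * (z - K))) with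
      (Rpower K (1-q) * Rpower K q + q * (Rpower K (1-q) * Rpower K (q - 1)) * (z - K)) in H by ring.
    rewrite E1, E2 in H.
    assert (0 < 1/q) by (apply Rdiv_lt_0_compat; lra).
    apply Rmult_le_compat_l with (r := 1/q) in H; [|lra].
    replace (1/q * (K + q * 1 * (z - K))) with (K/q + z - K) in H by (field; lra).
    replace ((1 - 1/q) * K) with (K - K/q) by (field; lra). lra.
  - assert (z = 0) by lra. subst. rewrite Rmult_0_r, Rplus_0_r.
    assert (1/q <= 1) by (apply Rmult_le_reg_r with q; [lra|]; field_simplify; lra).
    assert (0 <= 1 - 1/q) by lra. nra.
Qed.

Lemma opt q A B X : 1 <= q -> 0 < A -> 0 <= B ->
  (forall K, 0 < K -> X <= (1 - 1/q) * K * A + (1/q) * Rpower K (1-q) * B) ->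
  X <= rpow A (1 - 1/q) * rpow B (1/q).
Proof.
  intros Hq HA HB HK.
  assert (Hq1 : 0 < 1/q <= 1) by (split; [apply Rdiv_lt_0_compat; lra| apply Rmult_le_reg_r with q; [lra|]; field_simplify; lra]).
  unfold rpow. destruct (Rlt_dec 0 A) as [_|]; [|lra].
  destruct (Rlt_dec 0 B) as [HB'|HB'].
  - set (a := ln A). set (b := ln B).
    set (K := Rpower (B / A) (1/q)).
    assert (HKp : 0 < K) by apply Rpower_pos.
    specialize (HK K HKp).
    assert (EK : K = exp (1/q * (b - a))).
    { unfold K, Rpower. f_equal. unfold a, b. rewrite ln_div by lra. ring. }
    assert (EK2 : Rpower K (1-q) = exp ((1-q) * (1/q * (b - a)))).
    { unfold Rpower at 1. rewrite EK, ln_exp. reflexivity. }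
    assert (EA : A = exp a) by (unfold a; rewrite exp_ln; lra).
    assert (EB : B = exp b) by (unfold b; rewrite exp_ln; lra).
    assert (T : Rpower A (1 - 1/q) * Rpower B (1/q) = exp ((1 - 1/q) * a + 1/q * b)).
    { unfold Rpower. fold a b. rewrite <- exp_plus. reflexivity. }
    rewrite T. rewrite EK2, EK in HK.
    replace (B) with (exp b) in HK. replace (A) with (exp a) in HK.
    replace ((1 - 1 / q) * exp (1 / q * (b - a)) * exp a + 1 / q * exp ((1 - q) * (1 / q * (b - a))) * exp b)
      with ((1 - 1/q) * exp (1 / q * (b - a) + a) + 1/q * exp ((1 - q) * (1 / q * (b - a)) + b)) in HK
      by (rewrite !exp_plus; ring).
    replace (1 / q * (b - a) + a) with ((1 - 1/q) * a + 1/q * b) in HK by (field; lra).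
    replace ((1 - q) * (1 / q * (b - a)) + b) with ((1 - 1/q) * a + 1/q * b) in HK by (field; lra).
    lra.
  - assert (B = 0) by lra. subst B. rewrite Rmult_0_r.
    destruct (Rle_or_lt X 0) as [|HX]; auto. exfalso.
    specialize (HK (X / (2 * A)) ltac:(apply Rdiv_lt_0_compat; lra)).
    rewrite Rmult_0_r, Rplus_0_r in HK.
    replace ((1 - 1/q) * (X / (2*A)) * A) with ((1 - 1/q) * (X/2)) in HK by (field; lra).
    nra.
Qed.

Lemma side (F F' : R -> R) th al q U V m h L :
  0 < th -> 0 <= al <= 1 -> 1 <= q -> 0 < m -> 0 < h -> 0 <= U -> 0 <= V ->
  (forall t, 0 <= t < 2 -> is_derive F t (F' t)) ->
  (forall t, 0 < t < 1 -> exists y, Rabs (F' t) = h * y /\ 0 <= y /\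
       rpow y q <= Rpower t al * U + m * (1 - Rpower t al) * V) ->
  (forall eta, 0 < eta -> exists d, 0 < d /\ forall e, 0 < e < d ->
      Rabs (RInt (fun s => th * Rpower s (th-1) * F s) e 1 - L) < eta) ->
  Rabs (2/3 * F 1 + 1/3 * F 0 - L)
  <= h * (rpow (HA1 th (1/3)) (1 - 1/q) * rpow (U * HA2 al th (1/3) + m * V * HA3 al th (1/3)) (1/q)).
Proof.
  intros Hth Hal Hq Hm Hh HU HV HF HB HL.
  set (A1 := HA1 th (1/3)). set (A2 := HA2 al th (1/3)). set (A3 := HA3 al th (1/3)).
  assert (HA1p : 0 < A1) by (apply HA1_pos; auto).
  assert (HA2p : 0 <= A2) by (apply HA2_nonneg; lra).
  assert (HA3p : 0 <= A3) by (apply HA3_nonneg; lra).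
  set (E := Rabs (2/3 * F 1 + 1/3 * F 0 - L)).
  assert (Hq1 : 0 < 1/q) by (apply Rdiv_lt_0_compat; lra).
  assert (Hq2 : 0 <= 1 - 1/q) by (assert (1/q <= 1) by (apply Rmult_le_reg_r with q; [lra|]; field_simplify; lra); lra).
  assert (HX : E / h <= rpow A1 (1 - 1/q) * rpow (U * A2 + m * V * A3) (1/q)).
  { apply opt; auto.
    - assert (0 <= U * A2) by (apply Rmult_le_pos; lra).
      assert (0 <= m * V * A3) by (apply Rmult_le_pos; [apply Rmult_le_pos|]; lra). lra.
    - intros K HK.
      assert (HKp : 0 < Rpower K (1-q)) by apply Rpower_pos.
      set (P := h * ((1 - 1/q) * K + 1/q * Rpower K (1-q) * (m * V))).
      set (Q := h * (1/q * Rpower K (1-q) * (U - m * V))).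
      assert (Hc := core F F' th al (1/3) P Q L Hth (proj1 Hal) ltac:(lra) HF).
      rewrite Phi_closed in Hc by lra. fold A1 A2 in Hc.
      assert (Hc' : Rabs ((1 - 1/3) * F 1 + 1/3 * F 0 - L) <= P * A1 + Q * A2).
      { apply Hc; auto. intros t Ht. destruct (HB t Ht) as [y [Hy1 [Hy2 Hy3]]].
        rewrite Hy1. pose proof (young q K y Hq HK Hy2) as Hyo.
        assert (1/q * Rpower K (1-q) * rpow y q <= 1/q * Rpower K (1-q) * (Rpower t al * U + m * (1 - Rpower t al) * V))
          by (apply Rmult_le_compat_l; [apply Rmult_le_pos|]; lra).
        assert (h * y <= h * ((1 - 1/q) * K + 1/q * Rpower K (1-q) * (Rpower t al * U + m * (1 - Rpower t al) * V)))
          by (apply Rmult_le_compat_l; lra).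
        unfold P, Q. eapply Rle_trans; [exact H0|]. right. ring. }
      replace (1 - 1/3) with (2/3) in Hc' by field. fold E in Hc'.
      apply Rmult_le_reg_r with h; [lra|]. replace (E / h * h) with E by (field; lra).
      eapply Rle_trans; [exact Hc'|]. right. unfold P, Q, A3, HA3. fold A1 A2. ring. }
  apply Rmult_le_reg_r with (/h); [apply Rinv_0_lt_compat; lra|].
  replace (h * (rpow A1 (1 - 1/q) * rpow (U * A2 + m * V * A3) (1/q)) * / h)
    with (rpow A1 (1 - 1/q) * rpow (U * A2 + m * V * A3) (1/q)) by (field; lra).
  exact HX.
Qed.

Lemma int_between (I : R -> Prop) p r x : is_interval I -> int_pt I p -> int_pt I r ->
  p <= x <= r -> int_pt I x.
Proof.
  intros HI [d1 [Hd1 H1]] [d2 [Hd2 H2]] Hx.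
  assert (Ip : I p) by (apply H1; rewrite Rminus_diag, Rabs_R0; lra).
  assert (Ir : I r) by (apply H2; rewrite Rminus_diag, Rabs_R0; lra).
  exists (Rmin d1 d2). split; [apply Rmin_glb_lt; lra|].
  intros y Hy. pose proof (Rmin_l d1 d2). pose proof (Rmin_r d1 d2).
  apply abs_lt_inv in Hy.
  destruct (Rlt_or_le y p) as [Hyp|Hyp].
  - apply H1. apply Rabs_def1; lra.
  - destruct (Rlt_or_le r y) as [Hyr|Hyr].
    + apply H2. apply Rabs_def1; lra.
    + apply (HI p y r); auto.
Qed.

Lemma cont_bound (g : R -> R) a b : a <= b -> (forall z, a <= z <= b -> continuous g z) ->
  exists M, forall z, a <= z <= b -> Rabs (g z) <= M.
Proof.
  intros Hab Hg.
  destruct (continuity_ab_maj g a b Hab) as [x1 [Hx1 _]].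
  { intros z Hz. apply continuity_pt_filterlim. apply Hg; auto. }
  destruct (continuity_ab_maj (fun z => - g z) a b Hab) as [x2 [Hx2 _]].
  { intros z Hz. apply continuity_pt_opp. apply continuity_pt_filterlim. apply Hg; auto. }
  exists (Rmax (g x1) (- g x2)). intros z Hz.
  pose proof (Hx1 z Hz). pose proof (Hx2 z Hz).
  pose proof (Rmax_l (g x1) (- g x2)). pose proof (Rmax_r (g x1) (- g x2)).
  apply Rabs_le. lra.
Qed.

Lemma d_comp_lin (f : R -> R) (u v t d : R) : is_derive f (u * t + v) d ->
  is_derive (fun s => f (u * s + v)) t (u * d).
Proof.
  intros H. apply (is_derive_comp f (fun s => u * s + v)); auto. apply d_lin.
Qed.

Lemma rpow_nonneg x y : 0 <= rpow x y.
Proof. unfold rpow. destruct (Rlt_dec 0 x); [left; apply Rpower_pos| lra]. Qed.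

Lemma tpow_pos t al : 0 < t -> tpow t al = Rpower t al.
Proof. intros. unfold tpow. destruct (Rlt_dec 0 t); [reflexivity| lra]. Qed.

Lemma rpow_pos x y : 0 < x -> rpow x y = Rpower x y.
Proof. intros. unfold rpow. destruct (Rlt_dec 0 x); [reflexivity| lra]. Qed.

Theorem mainTheorem5 :
  forall (I : R -> Prop) (f f' : R -> R) (m alpha a b q th : R),
    is_interval I ->
    (forall x, I x -> 0 <= x) ->
    (forall x, int_pt I x -> derivable_pt_lim f x (f' x)) ->
    0 < m <= 1 ->
    0 <= alpha <= 1 ->
    a < b ->
    int_pt I (m * a) ->
    int_pt I b ->
    alpha_m_convex alpha m (fun x => m * a <= x <= b)
      (fun x => rpow (Rabs (f' x)) q) ->
    1 <= q ->
    0 < th ->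
    let c := m * (a + b) / 2 in
    Rabs (/ 6 * (f (m * a) + 4 * f c + f (m * b))
          - Gamma (th + 1) * rpow 2 (th - 1) / (rpow m th * rpow (b - a) th)
            * (JL th c f (m * a) + JR th c f (m * b)))
    <= m * (b - a) / 4 * rpow (HA1 th (1 / 3)) (1 - 1 / q) *
       ( rpow (rpow (Rabs (f' c)) q * HA2 alpha th (1 / 3)
               + m * rpow (Rabs (f' a)) q * HA3 alpha th (1 / 3)) (1 / q)
       + rpow (rpow (Rabs (f' c)) q * HA2 alpha th (1 / 3)
               + m * rpow (Rabs (f' b)) q * HA3 alpha th (1 / 3)) (1 / q)).
Proof.
  intros I f f' m alpha a b q th HI Hnn Hder Hm Hal Hab Hma Hb Hconv Hq Hth c.
  assert (HIma : I (m * a)).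
  { destruct Hma as [d [Hd Hy]]. apply Hy. rewrite Rminus_diag, Rabs_R0. lra. }
  assert (Hma0 : 0 <= m * a) by auto.
  assert (Ha0 : 0 <= a) by nra.
  assert (Hmbb : m * b <= b) by nra.
  assert (Hder' : forall x, m * a <= x <= b -> is_derive f x (f' x)).
  { intros x Hx. apply is_derive_Reals. apply Hder. apply (int_between I (m*a) b); auto. }
  assert (Hcont : forall x, m * a <= x <= b -> continuous f x).
  { intros x Hx. eapply cont_of_der. apply Hder'; auto. }
  set (h := m * (b - a) / 2).
  assert (Hh : 0 < h) by (unfold h; nra).
  assert (Hc : c = m * a + h) by (unfold c, h; field).
  assert (Hmb : m * b = m * a + 2 * h) by (unfold h; field).
  set (A1 := HA1 th (1/3)). set (A2 := HA2 alpha th (1/3)). set (A3 := HA3 alpha th (1/3)).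
  set (U := rpow (Rabs (f' c)) q).
  set (Va := rpow (Rabs (f' a)) q). set (Vb := rpow (Rabs (f' b)) q).
  assert (HU : 0 <= U) by apply rpow_nonneg.
  assert (HVa : 0 <= Va) by apply rpow_nonneg.
  assert (HVb : 0 <= Vb) by apply rpow_nonneg.
  set (gL := fun s => Rpower (s - m * a) (th - 1) * f s).
  set (L1 := epsilon (inhabits 0) (fun l => lim_left_int gL (m * a) c l)).
  assert (HL1 : lim_left_int gL (m * a) c L1).
  { apply (epsilon_spec (inhabits 0) (fun l => lim_left_int gL (m * a) c l)).
    destruct (cont_bound (fun z => f (h * z + m * a)) 0 1) as [M HM]; [lra| |].
    { intros z Hz. apply (continuous_comp (fun z => h * z + m * a) f).
      - eapply cont_of_der. apply d_lin.
      - apply Hcont. nra. }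
    rewrite Hc. apply (left_exists f th h (m * a) Hth Hh) with (M := M); auto.
    intros z Hz. apply Hcont. lra. }
  assert (Left : Rabs (2/3 * f c + 1/3 * f (m * a) - th * L1 / Rpower h th)
                 <= h * (rpow A1 (1 - 1/q) * rpow (U * A2 + m * Va * A3) (1/q))).
  { replace (f c) with ((fun t => f (h * t + m * a)) 1) by (simpl; f_equal; lra).
    replace (f (m * a)) with ((fun t => f (h * t + m * a)) 0) by (simpl; f_equal; ring).
    apply (side (fun t => f (h * t + m * a)) (fun t => h * f' (h * t + m * a)) th alpha q U Va m h); auto.
    - lra.
    - intros t Ht. apply d_comp_lin. apply Hder'. nra.
    - intros t Ht. exists (Rabs (f' (h * t + m * a))). split; [|split; [apply Rabs_pos|]].
      + rewrite Rabs_mult, Rabs_right by lra. reflexivity.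
      + rewrite <- tpow_pos by lra. unfold U, Va.
        replace (h * t + m * a) with (t * c + m * (1 - t) * a) by (rewrite Hc; ring).
        apply (Hconv c a t); try lra.
        1: nra.
        1: rewrite Hc; replace (t * (m * a + h) + m * (1 - t) * a) with (m * a + t * h) by ring; nra.
    - rewrite Hc in HL1. apply (left_to_HL f th h (m * a) Hth Hh); auto.
      intros z Hz. apply Hcont. lra. }
  set (gR := fun s => Rpower (m * b - s) (th - 1) * f s).
  set (L2 := epsilon (inhabits 0) (fun l => lim_right_int gR c (m * b) l)).
  assert (HL2 : lim_right_int gR c (m * b) L2).
  { apply (epsilon_spec (inhabits 0) (fun l => lim_right_int gR c (m * b) l)).
    destruct (cont_bound (fun z => f (- h * z + m * b)) 0 1) as [M HM]; [lra| |].
    { intros z Hz. apply (continuous_comp (fun z => - h * z + m * b) f).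
      - eapply cont_of_der. apply d_lin.
      - apply Hcont. nra. }
    replace c with (m * b - h) by lra.
    apply (right_exists f th h (m * b) Hth Hh) with (M := M); auto.
    intros z Hz. apply Hcont. lra. }
  assert (Right : Rabs (2/3 * f c + 1/3 * f (m * b) - th * L2 / Rpower h th)
                 <= h * (rpow A1 (1 - 1/q) * rpow (U * A2 + m * Vb * A3) (1/q))).
  { replace (f c) with ((fun t => f (- h * t + m * b)) 1) by (simpl; f_equal; lra).
    replace (f (m * b)) with ((fun t => f (- h * t + m * b)) 0) by (simpl; f_equal; ring).
    apply (side (fun t => f (- h * t + m * b)) (fun t => - h * f' (- h * t + m * b)) th alpha q U Vb m h); auto.
    - lra.
    - intros t Ht. apply d_comp_lin. apply Hder'. nra.
    - intros t Ht. exists (Rabs (f' (- h * t + m * b))). split; [|split; [apply Rabs_pos|]].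
      + rewrite Rabs_mult, Rabs_Ropp, Rabs_right by lra. reflexivity.
      + rewrite <- tpow_pos by lra. unfold U, Vb.
        assert (Ept : t * c + m * (1 - t) * b = - h * t + m * b).
        { rewrite Hc. replace (m * (1 - t) * b) with ((1 - t) * (m * b)) by ring. rewrite Hmb. ring. }
        rewrite <- Ept.
        apply (Hconv c b t); try lra.
        rewrite Ept; nra.
    - replace c with (m * b - h) in HL2 by lra.
      apply (right_to_HL f th h (m * b) Hth Hh); auto.
      intros z Hz. apply Hcont. lra. }
  destruct (Gamma_facts th Hth) as [HG1 HG2].
  assert (EJL : JL th c f (m * a) = / Gamma th * L1) by reflexivity.
  assert (EJR : JR th c f (m * b) = / Gamma th * L2) by reflexivity.
  rewrite EJL, EJR, HG2.
  rewrite (rpow_pos 2) by lra. rewrite (rpow_pos m) by lra. rewrite (rpow_pos (b - a)) by lra.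
  assert (P1 : Rpower h th * Rpower 2 th = Rpower m th * Rpower (b - a) th).
  { rewrite !Rpower_mult_distr by lra. f_equal. unfold h. field. }
  assert (P2 : Rpower 2 (th - 1) * 2 = Rpower 2 th).
  { rewrite <- (Rpower_1 2) at 2 by lra. rewrite <- Rpower_plus. f_equal. ring. }
  assert (Hph : 0 < Rpower h th) by apply Rpower_pos.
  assert (Hp2 : 0 < Rpower 2 th) by apply Rpower_pos.
  assert (Hpm : 0 < Rpower m th) by apply Rpower_pos.
  assert (Hpb : 0 < Rpower (b - a) th) by apply Rpower_pos.
  assert (EQ : / 6 * (f (m * a) + 4 * f c + f (m * b)) -
     th * Gamma th * Rpower 2 (th - 1) / (Rpower m th * Rpower (b - a) th) *
     (/ Gamma th * L1 + / Gamma th * L2)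
     = / 2 * ((2/3 * f c + 1/3 * f (m * a) - th * L1 / Rpower h th)
             + (2/3 * f c + 1/3 * f (m * b) - th * L2 / Rpower h th))).
  { rewrite <- P1, <- P2. field. repeat split; try lra. }
  rewrite EQ. fold A1 A2 A3 U Va Vb.
  rewrite Rabs_mult, Rabs_right by lra.
  eapply Rle_trans; [apply Rmult_le_compat_l; [lra| apply Rabs_triang]|].
  replace (m * (b - a) / 4) with (h / 2) by (unfold h; field).
  nra.
Qed.
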